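(* Let $\nu$ be a weight satisfying property (U), let $\mu$ be an arbitrary weight and let $g\in H(\mathbb{D})$. If $$\sup_{0\leq t<1}\ \sup_{0\leq\theta<2\pi}\mu(t)\int_0^t\frac{|g(re^{i\theta})|}{(1-r^2)\nu(r)}\,dr<+\infty\,,$$ then $S_g: H^{\infty}_\nu\rightarrow H^{\infty}_\mu$ is bounded.
   Context: $\mathbb{D}$ is the open unit disk and $H(\mathbb{D})$ the space of analytic functions on $\mathbb{D}$. A weight is a non-negative continuous function $\nu$ on $\mathbb{D}$ with $\nu(z)=\nu(|z|)$ for all $z$, which is decreasing in $|z|$; we write $\nu(r)$ for its value at $|z|=r$. For a weight $\nu$, $H^{\infty}_\nu=\{f\in H(\mathbb{D}): \sup_{z\in\mathbb{D}}\nu(z)|f(z)|<\infty\}$. A weight $\nu$ satisfies property (U) if there is $\alpha>0$ such that $r\mapsto \nu(r)/(1-r^2)^\alpha$ is almost increasing on $[0,1)$ (i.e. there is $C>0$ with $h(r)\le C h(s)$ whenever $r\le s$), equivalently $\inf_n \nu(1-2^{-(n+1)})/\nu(1-2^{-n})>0$. For $g\in H(\mathbb{D})$, $(S_gf)(z)=\int_0^z f'(\omega)g(\omega)\,d\omega$. *)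

(* Defs.v *)
From Stdlib Require Import Reals.
From Coquelicot Require Export Coquelicot.

Open Scope R_scope.

Definition in_disk (z : C) : Prop := Cmod z < 1.

Definition holomorphic_on_disk (f : C -> C) : Prop :=
  forall z : C, in_disk z -> ex_derive (K := C_AbsRing) f z.

(* A weight, given by its radial profile r |-> nu(r) on [0,1):
   non-negative, continuous on [0,1) (equivalently z |-> nu(|z|) continuous on D),
   and decreasing (non-increasing) in r. *)
Definition weight (nu : R -> R) : Prop :=
  (forall r, 0 <= r < 1 -> 0 <= nu r) /\
  (forall r, 0 <= r < 1 ->
     filterlim nu (within (fun x => 0 <= x < 1) (locally r)) (locally (nu r))) /\
  (forall r s, 0 <= r -> r <= s -> s < 1 -> nu s <= nu r).

Definition almost_increasing (h : R -> R) : Prop :=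
  exists Cst : R, 0 < Cst /\
    forall r s, 0 <= r -> r <= s -> s < 1 -> h r <= Cst * h s.

Definition property_U (nu : R -> R) : Prop :=
  exists alpha : R, 0 < alpha /\
    almost_increasing (fun r => nu r / Rpower (1 - r ^ 2) alpha).

(* S_g f (z) = int_0^z f'(w) g(w) dw, the integral along the segment [0,z],
   parametrised as w = t z, t in [0,1]; fp is the complex derivative of f. *)
Definition Sg (g fp : C -> C) (z : C) : C :=
  RInt (V := C_R_CompleteNormedModule)
       (fun t : R => (fp (RtoC t * z) * g (RtoC t * z) * z)%C) 0 1.

(* Main.v *)
Require Import Defs.
From Stdlib Require Import Reals.
From Coquelicot Require Import Coquelicot.
From Stdlib Require Import Lra Psatz ZArith.
Open Scope R_scope.

Lemma normC (x : C) : @norm _ C_NormedModule x = Cmod x.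
Proof. reflexivity. Qed.
Lemma normCR (x : C) : @norm _ C_R_NormedModule x = Cmod x.
Proof. symmetry. apply Cmod_norm. Qed.
Lemma scalCR (x : R) (y : C) : @scal _ C_R_NormedModule x y = Cmult (RtoC x) y.
Proof. destruct y as [a b]. unfold scal. simpl. unfold prod_scal. simpl.
  unfold Cmult, RtoC; simpl. f_equal; unfold scal; simpl; unfold mult; simpl; ring. Qed.

Definition ccont (F : C -> C) (z : C) : Prop :=
  forall eps, 0 < eps -> exists d, 0 < d /\
    forall w, Cmod (w - z) < d -> Cmod (F w - F z) < eps.

Lemma derC_eps (P : C -> C) z l : is_derive (K := C_AbsRing) (V := C_NormedModule) P z l ->
  forall eps, 0 < eps -> exists d, 0 < d /\ forall w, Cmod (w - z) < d ->
    Cmod (P w - P z - l * (w - z)) <= eps * Cmod (w - z).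
Proof.
  intros [_ H] eps Heps.
  specialize (H z (fun P H => H) (mkposreal eps Heps)).
  apply (locally_le_locally_norm (K:=C_AbsRing) (V:=AbsRing_NormedModule C_AbsRing)) in H. destruct H as [d Hd].
  exists d. split. apply cond_pos. intros w Hw.
  specialize (Hd w Hw). simpl in Hd.
  replace (l * (w - z))%C with ((w - z) * l)%C by ring. exact Hd.
Qed.

Lemma derC_intro (P : C -> C) z l :
  (forall eps, 0 < eps -> exists d, 0 < d /\ forall w, Cmod (w - z) < d ->
    Cmod (P w - P z - l * (w - z)) <= eps * Cmod (w - z)) ->
  is_derive (K := C_AbsRing) (V := C_NormedModule) P z l.
Proof.
  intros H. split. apply is_linear_scal_l.
  intros x Hx. apply (is_filter_lim_locally_unique (K:=C_AbsRing) (V:=AbsRing_NormedModule C_AbsRing)) in Hx. subst x.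
  intros eps. destruct (H eps (cond_pos eps)) as [d [Hd Hw]].
  apply (locally_norm_le_locally (K:=C_AbsRing) (V:=AbsRing_NormedModule C_AbsRing)). exists (mkposreal d Hd). intros w Hb.
  specialize (Hw w Hb).
  change (Cmod (P w - P z - (w - z) * l) <= eps * Cmod (w - z)).
  replace ((w - z) * l)%C with (l * (w - z))%C by ring. exact Hw.
Qed.

Lemma derR_intro (P : R -> C) t l :
  (forall eps, 0 < eps -> exists d, 0 < d /\ forall s, Rabs (s - t) < d ->
    Cmod (P s - P t - RtoC (s - t) * l) <= eps * Rabs (s - t)) ->
  is_derive (K := R_AbsRing) (V := C_R_NormedModule) P t l.
Proof.
  intros H. split. apply is_linear_scal_l.
  intros x Hx. apply (is_filter_lim_locally_unique (K:=R_AbsRing) (V:=AbsRing_NormedModule R_AbsRing)) in Hx. subst x.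
  intros eps. destruct (H eps (cond_pos eps)) as [d [Hd Hw]].
  apply (locally_norm_le_locally (K:=R_AbsRing) (V:=AbsRing_NormedModule R_AbsRing)). exists (mkposreal d Hd). intros w Hb.
  specialize (Hw w Hb). rewrite normCR, scalCR. exact Hw.
Qed.

Lemma Cmod_mult' (a b : C) : Cmod (a * b) = Cmod a * Cmod b.
Proof. apply Cmod_mult. Qed.

Lemma derC_ccont P z l : is_derive (K := C_AbsRing) (V := C_NormedModule) P z l -> ccont P z.
Proof.
  intros H eps Heps.
  destruct (derC_eps P z l H 1 Rlt_0_1) as [d [Hd Hw]].
  exists (Rmin d (eps / (Cmod l + 2))). split.
  apply Rmin_pos; auto. apply Rdiv_lt_0_compat; auto. pose proof (Cmod_ge_0 l); lra.
  intros w Hw'. 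
  assert (h1 : Cmod (w - z) < d) by (eapply Rlt_le_trans; [apply Hw'|apply Rmin_l]).
  assert (h2 : Cmod (w - z) < eps / (Cmod l + 2)) by (eapply Rlt_le_trans; [apply Hw'|apply Rmin_r]).
  specialize (Hw w h1).
  replace (P w - P z)%C with ((P w - P z - l * (w - z)) + l * (w - z))%C by ring.
  eapply Rle_lt_trans. apply Cmod_triangle. rewrite Cmod_mult.
  pose proof (Cmod_ge_0 l). pose proof (Cmod_ge_0 (w - z)).
  assert (Cmod (w - z) * (Cmod l + 2) < eps).
  { apply Rmult_lt_reg_r with (/ (Cmod l + 2)). apply Rinv_0_lt_compat; lra.
    rewrite Rmult_assoc, Rinv_r by lra. rewrite Rmult_1_r. exact h2. }
  nra.
Qed.

Lemma ccont_line (F : C -> C) (a b : C) t0 :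
  ccont F (a + RtoC t0 * b)%C ->
  continuous (T := R_UniformSpace) (U := C_R_CompleteNormedModule) (fun t : R => F (a + RtoC t * b)%C) t0.
Proof.
  intros H. unfold continuous. apply filterlim_locally. intros eps.
  destruct (H eps (cond_pos eps)) as [d [Hd Hw]].
  exists (mkposreal (d / (Cmod b + 1)) ltac:(apply Rdiv_lt_0_compat; [auto| pose proof (Cmod_ge_0 b); lra])).
  intros s Hs. simpl in Hs. apply (norm_compat1 (V := C_R_NormedModule)).
  rewrite normCR. apply Hw.
  replace (a + RtoC s * b - (a + RtoC t0 * b))%C with (RtoC (s - t0) * b)%C.
  2: { rewrite RtoC_minus. ring. }
  rewrite Cmod_mult, Cmod_R. unfold ball in Hs. simpl in Hs. unfold AbsRing_ball in Hs.
  simpl in Hs. unfold minus, plus, opp in Hs. simpl in Hs. unfold abs in Hs; simpl in Hs.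
  pose proof (Cmod_ge_0 b). pose proof (Rabs_pos (s + - t0)).
  assert (Rabs (s + - t0) * (Cmod b + 1) < d).
  { apply Rmult_lt_reg_r with (/ (Cmod b + 1)). apply Rinv_0_lt_compat; lra.
    rewrite Rmult_assoc, Rinv_r by lra. rewrite Rmult_1_r. exact Hs. }
  unfold Rminus. nra.
Qed.
Lemma der_line (P : C -> C) a b t0 l :
  is_derive (K := C_AbsRing) (V := C_NormedModule) P (a + RtoC t0 * b)%C l ->
  is_derive (K := R_AbsRing) (V := C_R_NormedModule) (fun t => P (a + RtoC t * b)%C) t0 (l * b)%C.
Proof.
  intros H. apply derR_intro. intros eps Heps.
  destruct (derC_eps P _ l H (eps / (Cmod b + 1))) as [d [Hd Hw]].
  { apply Rdiv_lt_0_compat; auto. pose proof (Cmod_ge_0 b); lra. }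
  exists (d / (Cmod b + 1)). split. apply Rdiv_lt_0_compat; auto. pose proof (Cmod_ge_0 b); lra.
  intros s Hs. pose proof (Cmod_ge_0 b).
  assert (E : (a + RtoC s * b - (a + RtoC t0 * b))%C = (RtoC (s - t0) * b)%C).
  { rewrite RtoC_minus. ring. }
  assert (Hm : Cmod (RtoC (s - t0) * b) = Rabs (s - t0) * Cmod b).
  { rewrite Cmod_mult, Cmod_R. reflexivity. }
  assert (h1 : Rabs (s - t0) * (Cmod b + 1) < d).
  { apply Rmult_lt_reg_r with (/ (Cmod b + 1)). apply Rinv_0_lt_compat; lra.
    rewrite Rmult_assoc, Rinv_r by lra. rewrite Rmult_1_r. exact Hs. }
  pose proof (Rabs_pos (s - t0)).
  assert (h2 : Cmod (a + RtoC s * b - (a + RtoC t0 * b)) < d) by (rewrite E, Hm; nra).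
  specialize (Hw _ h2). rewrite E in Hw.
  replace (RtoC (s - t0) * (l * b))%C with (l * (RtoC (s - t0) * b))%C by ring.
  eapply Rle_trans. apply Hw. rewrite Hm.
  replace (eps / (Cmod b + 1) * (Rabs (s - t0) * Cmod b)) with
    (eps * Rabs (s - t0) * (Cmod b / (Cmod b + 1))) by (field; lra).
  assert (Cmod b / (Cmod b + 1) <= 1).
  { apply Rmult_le_reg_r with (Cmod b + 1). lra. unfold Rdiv. rewrite Rmult_assoc, Rinv_l by lra. lra. }
  assert (0 <= eps * Rabs (s - t0)) by nra. nra.
Qed.


Lemma is_RInt_Cmult (f : R -> C) a b (l c : C) :
  is_RInt (V := C_R_NormedModule) f a b l ->
  is_RInt (V := C_R_NormedModule) (fun t => c * f t)%C a b (c * l)%C.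
Proof.
  intros H.
  pose proof (is_RInt_fct_extend_fst (U:=R_NormedModule) (V:=R_NormedModule) f a b l H) as H1.
  pose proof (is_RInt_fct_extend_snd (U:=R_NormedModule) (V:=R_NormedModule) f a b l H) as H2.
  destruct c as [c1 c2]. destruct l as [l1 l2]. simpl in H1, H2.
  apply (is_RInt_fct_extend_pair (U:=R_NormedModule) (V:=R_NormedModule)).
  - simpl. apply is_RInt_ext with (fun t => minus (scal c1 (fst (f t))) (scal c2 (snd (f t)))).
    { intros; reflexivity. }
    replace (c1 * l1 - c2 * l2) with (minus (scal c1 l1) (scal c2 l2)).
    2: { unfold minus, plus, opp, scal; simpl. unfold mult; simpl. ring. }
    apply (is_RInt_minus (V:=R_NormedModule)); apply (is_RInt_scal (V:=R_NormedModule)); assumption.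
  - simpl. apply is_RInt_ext with (fun t => plus (scal c1 (snd (f t))) (scal c2 (fst (f t)))).
    { intros. unfold plus, scal; simpl. unfold mult; simpl. ring. }
    replace (c1 * l2 + c2 * l1) with (plus (scal c1 l2) (scal c2 l1)).
    2: { unfold plus, scal; simpl. unfold mult; simpl. ring. }
    apply (is_RInt_plus (V:=R_NormedModule)); apply (is_RInt_scal (V:=R_NormedModule)); assumption.
Qed.

Lemma RInt_Cmult (f : R -> C) a b (c : C) :
  ex_RInt (V := C_R_NormedModule) f a b ->
  RInt (V := C_R_CompleteNormedModule) (fun t => c * f t)%C a b =
  (c * RInt (V := C_R_CompleteNormedModule) f a b)%C.
Proof.
  intros H. apply is_RInt_unique. apply is_RInt_Cmult.
  apply (RInt_correct (V := C_R_CompleteNormedModule)). exact H.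
Qed.

Lemma Cmod_RInt_le (f : R -> C) a b B :
  a <= b -> ex_RInt (V := C_R_NormedModule) f a b ->
  (forall t, a <= t <= b -> Cmod (f t) <= B) ->
  Cmod (RInt (V := C_R_CompleteNormedModule) f a b) <= (b - a) * B.
Proof.
  intros Hab Hf HB. rewrite <- normCR.
  apply (norm_RInt_le_const (V := C_R_NormedModule) f a b). exact Hab.
  intros t Ht. rewrite normCR. auto.
  apply (RInt_correct (V := C_R_CompleteNormedModule)). exact Hf.
Qed.

Lemma ex_RInt_line (F : C -> C) (a b : C) t1 t2 :
  (forall t, Rmin t1 t2 <= t <= Rmax t1 t2 -> ccont F (a + RtoC t * b)%C) ->
  ex_RInt (V := C_R_NormedModule) (fun t => F (a + RtoC t * b)%C) t1 t2.
Proof.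
  intros H. apply (ex_RInt_continuous (V := C_R_CompleteNormedModule)).
  intros t Ht. apply ccont_line. auto.
Qed.

Definition Hs (F : C -> C) (y a b : R) : C :=
  RInt (V := C_R_CompleteNormedModule) (fun t => F (t, y)) a b.
Definition Vs (F : C -> C) (x a b : R) : C :=
  RInt (V := C_R_CompleteNormedModule) (fun t => F (x, t)) a b.
Definition J (F : C -> C) x1 x2 y1 y2 : C :=
  (Hs F y1 x1 x2 + Ci * Vs F x2 y1 y2 - Hs F y2 x1 x2 - Ci * Vs F x1 y1 y2)%C.

Lemma pt_h (t y : R) : ((0, y) + RtoC t * (1, 0))%C = (t, y).
Proof. unfold Cplus, Cmult, RtoC; simpl; f_equal; ring. Qed.
Lemma pt_v (x t : R) : ((x, 0) + RtoC t * (0, 1))%C = (x, t).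
Proof. unfold Cplus, Cmult, RtoC; simpl; f_equal; ring. Qed.

Lemma ex_RInt_h F y a b : (forall t, Rmin a b <= t <= Rmax a b -> ccont F (t, y)) ->
  ex_RInt (V := C_R_NormedModule) (fun t => F (t, y)) a b.
Proof.
  intros H. apply (ex_RInt_ext (V := C_R_NormedModule) (fun t => F ((0, y) + RtoC t * (1, 0))%C)).
  intros; rewrite pt_h; auto.
  apply ex_RInt_line. intros; rewrite pt_h; auto.
Qed.
Lemma ex_RInt_v F x a b : (forall t, Rmin a b <= t <= Rmax a b -> ccont F (x, t)) ->
  ex_RInt (V := C_R_NormedModule) (fun t => F (x, t)) a b.
Proof.
  intros H. apply (ex_RInt_ext (V := C_R_NormedModule) (fun t => F ((x, 0) + RtoC t * (0, 1))%C)).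
  intros; rewrite pt_v; auto.
  apply ex_RInt_line. intros; rewrite pt_v; auto.
Qed.

Definition bgood (F : C -> C) x1 x2 y1 y2 : Prop :=
  (forall t, x1 <= t <= x2 -> ccont F (t, y1) /\ ccont F (t, y2)) /\
  (forall t, y1 <= t <= y2 -> ccont F (x1, t) /\ ccont F (x2, t)).
Definition rgood (F : C -> C) x1 x2 y1 y2 : Prop :=
  forall x y, x1 <= x <= x2 -> y1 <= y <= y2 -> ccont F (x, y).

Lemma rgood_bgood F x1 x2 y1 y2 : x1 <= x2 -> y1 <= y2 -> rgood F x1 x2 y1 y2 -> bgood F x1 x2 y1 y2.
Proof. intros h1 h2 H. split; intros t Ht; split; apply H; lra. Qed.

Lemma mm a b : a <= b -> Rmin a b = a /\ Rmax a b = b.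
Proof. intros; split; [apply Rmin_left|apply Rmax_right]; lra. Qed.

Lemma bgood_ex F x1 x2 y1 y2 : x1 <= x2 -> y1 <= y2 -> bgood F x1 x2 y1 y2 ->
  ex_RInt (V := C_R_NormedModule) (fun t => F (t, y1)) x1 x2 /\
  ex_RInt (V := C_R_NormedModule) (fun t => F (t, y2)) x1 x2 /\
  ex_RInt (V := C_R_NormedModule) (fun t => F (x1, t)) y1 y2 /\
  ex_RInt (V := C_R_NormedModule) (fun t => F (x2, t)) y1 y2.
Proof.
  intros h1 h2 [Hh Hv]. destruct (mm _ _ h1) as [e1 e2]. destruct (mm _ _ h2) as [e3 e4].
  split; [|split; [|split]].
  - apply ex_RInt_h. intros t Ht. rewrite e1, e2 in Ht. apply (Hh t Ht).
  - apply ex_RInt_h. intros t Ht. rewrite e1, e2 in Ht. apply (Hh t Ht).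
  - apply ex_RInt_v. intros t Ht. rewrite e3, e4 in Ht. apply (Hv t Ht).
  - apply ex_RInt_v. intros t Ht. rewrite e3, e4 in Ht. apply (Hv t Ht).
Qed.

Lemma RInt_Cminus (f g : R -> C) a b :
  ex_RInt (V := C_R_NormedModule) f a b -> ex_RInt (V := C_R_NormedModule) g a b ->
  RInt (V := C_R_CompleteNormedModule) (fun t => f t - g t)%C a b =
  (RInt (V := C_R_CompleteNormedModule) f a b - RInt (V := C_R_CompleteNormedModule) g a b)%C.
Proof. intros Hf Hg. exact (RInt_minus (V := C_R_CompleteNormedModule) f g a b Hf Hg). Qed.

Lemma J_minus F G x1 x2 y1 y2 : x1 <= x2 -> y1 <= y2 ->
  bgood F x1 x2 y1 y2 -> bgood G x1 x2 y1 y2 ->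
  J (fun z => F z - G z)%C x1 x2 y1 y2 = (J F x1 x2 y1 y2 - J G x1 x2 y1 y2)%C.
Proof.
  intros h1 h2 HF HG.
  destruct (bgood_ex F _ _ _ _ h1 h2 HF) as [a1 [a2 [a3 a4]]].
  destruct (bgood_ex G _ _ _ _ h1 h2 HG) as [b1 [b2 [b3 b4]]].
  unfold J, Hs, Vs. rewrite !RInt_Cminus by assumption. ring.
Qed.

Lemma J_scal F c x1 x2 y1 y2 : x1 <= x2 -> y1 <= y2 ->
  bgood F x1 x2 y1 y2 ->
  J (fun z => c * F z)%C x1 x2 y1 y2 = (c * J F x1 x2 y1 y2)%C.
Proof.
  intros h1 h2 HF.
  destruct (bgood_ex F _ _ _ _ h1 h2 HF) as [a1 [a2 [a3 a4]]].
  unfold J, Hs, Vs. rewrite !RInt_Cmult by assumption. ring.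
Qed.

Lemma J_ext F G x1 x2 y1 y2 : x1 <= x2 -> y1 <= y2 ->
  (forall t, x1 <= t <= x2 -> F (t, y1) = G (t, y1) /\ F (t, y2) = G (t, y2)) ->
  (forall t, y1 <= t <= y2 -> F (x1, t) = G (x1, t) /\ F (x2, t) = G (x2, t)) ->
  J F x1 x2 y1 y2 = J G x1 x2 y1 y2.
Proof.
  intros h1 h2 Hh Hv. destruct (mm _ _ h1) as [e1 e2]. destruct (mm _ _ h2) as [e3 e4].
  unfold J, Hs, Vs.
  rewrite (RInt_ext (V := C_R_CompleteNormedModule) (fun t => F (t, y1)) (fun t => G (t, y1)))
    by (intros t Ht; rewrite e1, e2 in Ht; apply Hh; lra).
  rewrite (RInt_ext (V := C_R_CompleteNormedModule) (fun t => F (t, y2)) (fun t => G (t, y2)))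
    by (intros t Ht; rewrite e1, e2 in Ht; apply Hh; lra).
  rewrite (RInt_ext (V := C_R_CompleteNormedModule) (fun t => F (x1, t)) (fun t => G (x1, t)))
    by (intros t Ht; rewrite e3, e4 in Ht; apply Hv; lra).
  rewrite (RInt_ext (V := C_R_CompleteNormedModule) (fun t => F (x2, t)) (fun t => G (x2, t)))
    by (intros t Ht; rewrite e3, e4 in Ht; apply Hv; lra).
  reflexivity.
Qed.

Lemma Cmod_Ci_mult (v : C) : Cmod (Ci * v) = Cmod v.
Proof. rewrite Cmod_mult. replace (Cmod Ci) with 1. ring.
  unfold Cmod, Ci; simpl. rewrite <- sqrt_1 at 1. f_equal. ring. Qed.

Lemma Cmod_sub_le (a b : C) : Cmod (a - b) <= Cmod a + Cmod b.
Proof. unfold Cminus. eapply Rle_trans. apply Cmod_triangle. rewrite Cmod_opp. lra. Qed.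

Lemma J_bound F x1 x2 y1 y2 B : x1 <= x2 -> y1 <= y2 -> bgood F x1 x2 y1 y2 ->
  (forall t, x1 <= t <= x2 -> Cmod (F (t, y1)) <= B /\ Cmod (F (t, y2)) <= B) ->
  (forall t, y1 <= t <= y2 -> Cmod (F (x1, t)) <= B /\ Cmod (F (x2, t)) <= B) ->
  Cmod (J F x1 x2 y1 y2) <= 2 * ((x2 - x1) + (y2 - y1)) * B.
Proof.
  intros h1 h2 HF Hh Hv.
  destruct (bgood_ex F _ _ _ _ h1 h2 HF) as [a1 [a2 [a3 a4]]].
  unfold J.
  assert (c1 : Cmod (Hs F y1 x1 x2) <= (x2 - x1) * B) by (apply Cmod_RInt_le; auto; intros; apply Hh; auto).
  assert (c2 : Cmod (Hs F y2 x1 x2) <= (x2 - x1) * B) by (apply Cmod_RInt_le; auto; intros; apply Hh; auto).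
  assert (c3 : Cmod (Vs F x1 y1 y2) <= (y2 - y1) * B) by (apply Cmod_RInt_le; auto; intros; apply Hv; auto).
  assert (c4 : Cmod (Vs F x2 y1 y2) <= (y2 - y1) * B) by (apply Cmod_RInt_le; auto; intros; apply Hv; auto).
  eapply Rle_trans. apply Cmod_sub_le. rewrite Cmod_Ci_mult.
  eapply Rle_trans. apply Rplus_le_compat_r. apply Cmod_sub_le.
  eapply Rle_trans. apply Rplus_le_compat_r. apply Rplus_le_compat_r. apply Cmod_triangle.
  rewrite Cmod_Ci_mult. lra.
Qed.

Lemma RInt_Chasles_C (f : R -> C) a b c :
  ex_RInt (V := C_R_NormedModule) f a b -> ex_RInt (V := C_R_NormedModule) f b c ->
  RInt (V := C_R_CompleteNormedModule) f a c =
  (RInt (V := C_R_CompleteNormedModule) f a b + RInt (V := C_R_CompleteNormedModule) f b c)%C.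
Proof. intros H1 H2. symmetry. exact (RInt_Chasles (V := C_R_CompleteNormedModule) f a b c H1 H2). Qed.

Lemma J_splitx F x1 x2 x3 y1 y2 : x1 <= x2 -> x2 <= x3 -> y1 <= y2 ->
  rgood F x1 x3 y1 y2 ->
  J F x1 x3 y1 y2 = (J F x1 x2 y1 y2 + J F x2 x3 y1 y2)%C.
Proof.
  intros h1 h2 h3 H. unfold J, Hs.
  destruct (mm _ _ h1) as [e1 e2]. destruct (mm _ _ h2) as [e3 e4].
  rewrite (RInt_Chasles_C (fun t => F (t, y1)) x1 x2 x3).
  rewrite (RInt_Chasles_C (fun t => F (t, y2)) x1 x2 x3).
  ring.
  all: apply ex_RInt_h; intros t Ht; rewrite ?e1, ?e2, ?e3, ?e4 in Ht; apply H; lra.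
Qed.

Lemma J_splity F x1 x2 y1 y2 y3 : x1 <= x2 -> y1 <= y2 -> y2 <= y3 ->
  rgood F x1 x2 y1 y3 ->
  J F x1 x2 y1 y3 = (J F x1 x2 y1 y2 + J F x1 x2 y2 y3)%C.
Proof.
  intros h1 h2 h3 H. unfold J, Vs.
  destruct (mm _ _ h2) as [e1 e2]. destruct (mm _ _ h3) as [e3 e4].
  rewrite (RInt_Chasles_C (fun t => F (x1, t)) y1 y2 y3).
  rewrite (RInt_Chasles_C (fun t => F (x2, t)) y1 y2 y3).
  ring.
  all: apply ex_RInt_v; intros t Ht; rewrite ?e1, ?e2, ?e3, ?e4 in Ht; apply H; lra.
Qed.

Lemma rgood_sub F x1 x2 y1 y2 a1 a2 b1 b2 : x1 <= a1 -> a2 <= x2 -> y1 <= b1 -> b2 <= y2 ->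
  rgood F x1 x2 y1 y2 -> rgood F a1 a2 b1 b2.
Proof. intros h1 h2 h3 h4 H x y Hx Hy. apply H; lra. Qed.

Lemma Cmult_10 (l : C) : (l * (1, 0))%C = l.
Proof. destruct l; unfold Cmult; simpl; f_equal; ring. Qed.
Lemma Cmult_01 (l : C) : (l * (0, 1))%C = (Ci * l)%C.
Proof. destruct l; unfold Cmult, Ci; simpl; f_equal; ring. Qed.

Lemma Hs_prim (P G : C -> C) y a b : a <= b ->
  (forall t, a <= t <= b -> is_derive (K := C_AbsRing) (V := C_NormedModule) P (t, y) (G (t, y))) ->
  (forall t, a <= t <= b -> ccont G (t, y)) ->
  Hs G y a b = (P (b, y) - P (a, y))%C.
Proof.
  intros hab HP HG. destruct (mm _ _ hab) as [e1 e2]. unfold Hs.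
  apply (is_RInt_unique (V := C_R_CompleteNormedModule)).
  apply (is_RInt_derive (V := C_R_CompleteNormedModule) (fun t => P (t, y)) (fun t => G (t, y))).
  - intros t Ht. rewrite e1, e2 in Ht.
    apply (is_derive_ext (fun t => P ((0, y) + RtoC t * (1, 0))%C)).
    { intros; rewrite pt_h; reflexivity. }
    rewrite <- (Cmult_10 (G (t, y))).
    apply der_line. rewrite pt_h. auto.
  - intros t Ht. rewrite e1, e2 in Ht.
    apply (continuous_ext (T := R_UniformSpace) (U := C_R_CompleteNormedModule) (fun t => G ((0, y) + RtoC t * (1, 0))%C)).
    { intros; rewrite pt_h; reflexivity. }
    apply ccont_line. rewrite pt_h. auto.
Qed.

Lemma Vs_prim (P G : C -> C) x a b : a <= b ->
  (forall t, a <= t <= b -> is_derive (K := C_AbsRing) (V := C_NormedModule) P (x, t) (G (x, t))) ->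
  (forall t, a <= t <= b -> ccont G (x, t)) ->
  (Ci * Vs G x a b)%C = (P (x, b) - P (x, a))%C.
Proof.
  intros hab HP HG. destruct (mm _ _ hab) as [e1 e2]. unfold Vs.
  rewrite <- RInt_Cmult.
  2: { apply ex_RInt_v. rewrite e1, e2. auto. }
  apply (is_RInt_unique (V := C_R_CompleteNormedModule)).
  apply (is_RInt_derive (V := C_R_CompleteNormedModule) (fun t => P (x, t)) (fun t => Ci * G (x, t))%C).
  - intros t Ht. rewrite e1, e2 in Ht.
    apply (is_derive_ext (fun t => P ((x, 0) + RtoC t * (0, 1))%C)).
    { intros; rewrite pt_v; reflexivity. }
    rewrite <- (Cmult_01 (G (x, t))).
    apply der_line. rewrite pt_v. auto.
  - intros t Ht. rewrite e1, e2 in Ht.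
    apply (continuous_ext (T := R_UniformSpace) (U := C_R_CompleteNormedModule) (fun t => Ci * G ((x, 0) + RtoC t * (0, 1)))%C).
    { intros; rewrite pt_v; reflexivity. }
    apply (ccont_line (fun w => Ci * G w)%C). rewrite pt_v.
    intros eps Heps. destruct (HG t Ht eps Heps) as [d [Hd Hw]]. exists d; split; auto.
    intros w Hw'. replace (Ci * G w - Ci * G (x, t))%C with (Ci * (G w - G (x, t)))%C by ring.
    rewrite Cmod_Ci_mult. auto.
Qed.

Lemma J_deriv0 (P G : C -> C) x1 x2 y1 y2 : x1 <= x2 -> y1 <= y2 ->
  (forall x y, x1 <= x <= x2 -> y1 <= y <= y2 ->
     is_derive (K := C_AbsRing) (V := C_NormedModule) P (x, y) (G (x, y))) ->
  rgood G x1 x2 y1 y2 ->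
  J G x1 x2 y1 y2 = 0%C.
Proof.
  intros h1 h2 HP HG. unfold J.
  rewrite (Hs_prim P G y1 x1 x2), (Hs_prim P G y2 x1 x2), (Vs_prim P G x1 y1 y2), (Vs_prim P G x2 y1 y2);
  try assumption; try (intros; apply HP; lra); try (intros; apply HG; lra).
  ring.
Qed.

Lemma Cmod_l1 (a b : R) : Cmod (a, b) <= Rabs a + Rabs b.
Proof.
  unfold Cmod. simpl. rewrite <- (sqrt_pow2 (Rabs a + Rabs b)).
  2: { pose proof (Rabs_pos a); pose proof (Rabs_pos b); lra. }
  apply sqrt_le_1_alt. rewrite <- (pow2_abs a) at 1. rewrite <- (pow2_abs b) at 1.
  pose proof (Rabs_pos a); pose proof (Rabs_pos b). nra.
Qed.

Lemma Cmod_diff_l1 (x y x' y' : R) : Cmod ((x, y) - (x', y'))%C <= Rabs (x - x') + Rabs (y - y').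
Proof. apply Cmod_l1. Qed.

Lemma pow2_big (A : R) : exists n : nat, A < 2 ^ n.
Proof.
  destruct (archimed A) as [h _].
  assert (Hn : forall n : nat, INR n <= 2 ^ n).
  { induction n. simpl; lra. rewrite S_INR. simpl. assert (1 <= 2 ^ n) by (apply pow_R1_Rle; lra). lra. }
  destruct (Z.le_gt_cases (up A) 0) as [hz|hz].
  - exists O. apply IZR_le in hz. simpl. lra.
  - exists (Z.to_nat (up A)). eapply Rlt_le_trans. apply h.
    rewrite <- (Z2Nat.id (up A)) at 1 by lia. rewrite <- INR_IZR_INZ. apply Hn.
Qed.

Lemma half_C : ((Rinv 2, 0) + (Rinv 2, 0))%C = 1%C.
Proof. unfold Cplus; simpl. unfold RtoC. f_equal; field. Qed.

Lemma J_affine0 (a b : C) x1 x2 y1 y2 : x1 <= x2 -> y1 <= y2 ->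
  J (fun w => a + b * w)%C x1 x2 y1 y2 = 0%C.
Proof.
  intros h1 h2.
  apply (J_deriv0 (fun w => a * w + b * (Rinv 2, 0) * (w * w))%C); auto.
  - intros x y _ _. apply derC_intro. intros eps Heps.
    set (z := (x, y)).
    exists (eps / (Cmod b + 1)). split. apply Rdiv_lt_0_compat; auto. pose proof (Cmod_ge_0 b); lra.
    intros w Hw.
    replace (a * w + b * (Rinv 2, 0) * (w * w) - (a * z + b * (Rinv 2, 0) * (z * z)) - (a + b * z) * (w - z))%C
      with (b * (Rinv 2, 0) * ((w - z) * (w - z)) + b * (w - z) * z * (((Rinv 2, 0) + (Rinv 2, 0)) - 1))%C by ring.
    rewrite half_C. replace (b * (Rinv 2, 0) * ((w - z) * (w - z)) + b * (w - z) * z * (1 - 1))%C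
      with (b * (Rinv 2, 0) * ((w - z) * (w - z)))%C by ring.
    rewrite !Cmod_mult.
    assert (Cmod ((Rinv 2, 0)) = / 2).
    { transitivity (Rabs (/ 2)). exact (Cmod_R (/ 2)). apply Rabs_right. lra. }
    rewrite H. pose proof (Cmod_ge_0 b). pose proof (Cmod_ge_0 (w - z)).
    assert (Cmod (w - z) * (Cmod b + 1) < eps).
    { apply Rmult_lt_reg_r with (/ (Cmod b + 1)). apply Rinv_0_lt_compat; lra.
      rewrite Rmult_assoc, Rinv_r by lra. rewrite Rmult_1_r. exact Hw. }
    nra.
  - intros x y _ _. apply (derC_ccont _ _ b). apply derC_intro. intros eps Heps.
    exists 1. split. lra. intros w _.
    match goal with |- Cmod ?e <= _ => replace e with (RtoC 0) by ring end.
    rewrite Cmod_0. match goal with |- _ <= _ * Cmod ?e => pose proof (Cmod_ge_0 e) end. nra.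
Qed.

Record rect := mkR { r1 : R; r2 : R; s1 : R; s2 : R }.
Definition Jr F r := J F (r1 r) (r2 r) (s1 r) (s2 r).

Definition quad (k : nat) (r : rect) : rect :=
  let mx := (r1 r + r2 r) / 2 in let my := (s1 r + s2 r) / 2 in
  match k with
  | O => mkR (r1 r) mx (s1 r) my
  | 1%nat => mkR mx (r2 r) (s1 r) my
  | 2%nat => mkR (r1 r) mx my (s2 r)
  | _ => mkR mx (r2 r) my (s2 r)
  end.

Definition next (F : C -> C) (r : rect) : rect :=
  if Rle_dec (Cmod (Jr F r) / 4) (Cmod (Jr F (quad 0 r))) then quad 0 r
  else if Rle_dec (Cmod (Jr F r) / 4) (Cmod (Jr F (quad 1 r))) then quad 1 r
  else if Rle_dec (Cmod (Jr F r) / 4) (Cmod (Jr F (quad 2 r))) then quad 2 r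
  else quad 3 r.

Definition subh (r q : rect) : Prop :=
  r1 r <= r1 q /\ r2 q <= r2 r /\ s1 r <= s1 q /\ s2 q <= s2 r /\
  r2 q - r1 q = (r2 r - r1 r) / 2 /\ s2 q - s1 q = (s2 r - s1 r) / 2.

Definition wf (r : rect) := r1 r <= r2 r /\ s1 r <= s2 r.
Definition rg F r := rgood F (r1 r) (r2 r) (s1 r) (s2 r).

Lemma quad_subh k r : wf r -> subh r (quad k r).
Proof.
  intros [h1 h2]. unfold subh, quad.
  destruct k as [|[|[|k]]]; simpl; repeat split; lra.
Qed.

Lemma quad_sum F r : wf r -> rg F r ->
  Jr F r = (Jr F (quad 0 r) + Jr F (quad 1 r) + Jr F (quad 2 r) + Jr F (quad 3 r))%C.
Proof.
  intros [h1 h2] H. unfold Jr, quad, rg in *; simpl.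
  set (mx := (r1 r + r2 r) / 2). set (my := (s1 r + s2 r) / 2).
  assert (r1 r <= mx <= r2 r) by (unfold mx; lra).
  assert (s1 r <= my <= s2 r) by (unfold my; lra).
  rewrite (J_splitx F _ mx); try lra; auto.
  rewrite (J_splity F (r1 r) mx _ my); try lra.
  2: { eapply rgood_sub; [| | | |apply H]; lra. }
  rewrite (J_splity F mx (r2 r) _ my); try lra.
  2: { eapply rgood_sub; [| | | |apply H]; lra. }
  ring.
Qed.

Lemma next_prop F r : wf r -> rg F r ->
  subh r (next F r) /\ Cmod (Jr F r) / 4 <= Cmod (Jr F (next F r)).
Proof.
  intros hw hg. unfold next.
  destruct (Rle_dec _ _) as [a|a]. split; auto. apply quad_subh; auto.
  destruct (Rle_dec _ _) as [b|b]. split; auto. apply quad_subh; auto.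
  destruct (Rle_dec _ _) as [c|c]. split; auto. apply quad_subh; auto.
  split. apply quad_subh; auto.
  pose proof (quad_sum F r hw hg) as E.
  assert (Cmod (Jr F r) <= Cmod (Jr F (quad 0 r)) + Cmod (Jr F (quad 1 r)) + Cmod (Jr F (quad 2 r)) + Cmod (Jr F (quad 3 r))).
  { rewrite E. eapply Rle_trans. apply Cmod_triangle. apply Rplus_le_compat_r.
    eapply Rle_trans. apply Cmod_triangle. apply Rplus_le_compat_r. apply Cmod_triangle. }
  lra.
Qed.

Fixpoint rs (F : C -> C) (r0 : rect) (n : nat) : rect :=
  match n with O => r0 | S k => next F (rs F r0 k) end.

Lemma subh_wf r q : wf r -> subh r q -> wf q.
Proof. unfold wf, subh; intros; lra. Qed.

Lemma rs_inv F r0 : wf r0 -> rg F r0 -> forall n,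
  wf (rs F r0 n) /\ rg F (rs F r0 n) /\
  r1 r0 <= r1 (rs F r0 n) /\ r2 (rs F r0 n) <= r2 r0 /\
  s1 r0 <= s1 (rs F r0 n) /\ s2 (rs F r0 n) <= s2 r0 /\
  r2 (rs F r0 n) - r1 (rs F r0 n) = (r2 r0 - r1 r0) / 2 ^ n /\
  s2 (rs F r0 n) - s1 (rs F r0 n) = (s2 r0 - s1 r0) / 2 ^ n /\
  Cmod (Jr F r0) / 4 ^ n <= Cmod (Jr F (rs F r0 n)).
Proof.
  intros hw hg. induction n.
  - simpl. unfold wf in hw. repeat split; try lra; auto.
  - destruct IHn as [w [g [a1 [a2 [a3 [a4 [a5 [a6 a7]]]]]]]].
    simpl. destruct (next_prop F _ w g) as [[b1 [b2 [b3 [b4 [b5 b6]]]]] b7].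
    assert (p2 : 0 < 2 ^ n) by (apply pow_lt; lra).
    assert (p4 : 0 < 4 ^ n) by (apply pow_lt; lra).
    repeat split.
    + apply (subh_wf _ _ w). unfold subh; repeat split; auto.
    + apply (subh_wf _ _ w). unfold subh; repeat split; auto.
    + unfold rg. eapply rgood_sub; [| | | |apply g]; auto.
    + lra. + lra. + lra. + lra.
    + rewrite b5, a5. field. lra.
    + rewrite b6, a6. field. lra.
    + eapply Rle_trans. 2: apply b7.
      replace (Cmod (Jr F r0) / (4 * 4 ^ n)) with (Cmod (Jr F r0) / 4 ^ n / 4) by (field; lra).
      lra.
Qed.

Lemma rs_mono F r0 : wf r0 -> rg F r0 -> forall n k,
  r1 (rs F r0 n) <= r1 (rs F r0 (n + k)) /\ r2 (rs F r0 (n + k)) <= r2 (rs F r0 n) /\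
  s1 (rs F r0 n) <= s1 (rs F r0 (n + k)) /\ s2 (rs F r0 (n + k)) <= s2 (rs F r0 n).
Proof.
  intros hw hg n k. induction k.
  - rewrite Nat.add_0_r. lra.
  - rewrite Nat.add_succ_r. simpl.
    destruct (rs_inv F r0 hw hg (n + k)) as [w [g _]].
    destruct (next_prop F _ w g) as [[b1 [b2 [b3 [b4 _]]]] _]. lra.
Qed.

Lemma rs_cross F r0 : wf r0 -> rg F r0 -> forall n m,
  r1 (rs F r0 n) <= r2 (rs F r0 m) /\ s1 (rs F r0 n) <= s2 (rs F r0 m).
Proof.
  intros hw hg n m. destruct (Nat.le_ge_cases n m) as [h|h].
  - destruct (Nat.le_exists_sub n m h) as [k [-> _]]. rewrite Nat.add_comm.
    destruct (rs_mono F r0 hw hg n k) as [a [b [c d]]].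
    destruct (rs_inv F r0 hw hg (n + k)) as [[w1 w2] _]. lra.
  - destruct (Nat.le_exists_sub m n h) as [k [-> _]]. rewrite Nat.add_comm.
    destruct (rs_mono F r0 hw hg m k) as [a [b [c d]]].
    destruct (rs_inv F r0 hw hg (m + k)) as [[w1 w2] _]. lra.
Qed.

Lemma affine_der (a b : C) z : is_derive (K := C_AbsRing) (V := C_NormedModule) (fun w => a + b * w)%C z b.
Proof.
  apply derC_intro. intros eps Heps. exists 1. split. lra. intros w _.
  match goal with |- Cmod ?e <= _ => replace e with (RtoC 0) by ring end.
  rewrite Cmod_0. match goal with |- _ <= _ * Cmod ?e => pose proof (Cmod_ge_0 e) end. nra.
Qed.

Lemma ccont_minus F G z : ccont F z -> ccont G z -> ccont (fun w => F w - G w)%C z.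
Proof.
  intros hF hG eps Heps.
  destruct (hF (eps/2)) as [d1 [h1 k1]]. lra.
  destruct (hG (eps/2)) as [d2 [h2 k2]]. lra.
  exists (Rmin d1 d2). split. apply Rmin_pos; auto.
  intros w Hw. assert (Cmod (w - z) < d1) by (eapply Rlt_le_trans; [apply Hw|apply Rmin_l]).
  assert (Cmod (w - z) < d2) by (eapply Rlt_le_trans; [apply Hw|apply Rmin_r]).
  replace (F w - G w - (F z - G z))%C with ((F w - F z) - (G w - G z))%C by ring.
  eapply Rle_lt_trans. apply Cmod_sub_le. specialize (k1 w H). specialize (k2 w H0). lra.
Qed.

Lemma bgood_minus F G x1 x2 y1 y2 : bgood F x1 x2 y1 y2 -> bgood G x1 x2 y1 y2 ->
  bgood (fun w => F w - G w)%C x1 x2 y1 y2.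
Proof.
  intros [a b] [c d]. split; intros t Ht.
  - destruct (a t Ht), (c t Ht). split; apply ccont_minus; auto.
  - destruct (b t Ht), (d t Ht). split; apply ccont_minus; auto.
Qed.

Lemma pow4 n : 4 ^ n = 2 ^ n * 2 ^ n.
Proof. induction n; simpl. ring. rewrite IHn. ring. Qed.

Theorem goursat (F : C -> C) X1 X2 Y1 Y2 : X1 <= X2 -> Y1 <= Y2 ->
  (forall x y, X1 <= x <= X2 -> Y1 <= y <= Y2 -> ex_derive (K := C_AbsRing) (V := C_NormedModule) F (x, y)) ->
  J F X1 X2 Y1 Y2 = 0%C.
Proof.
  intros hx hy HD.
  set (r0 := mkR X1 X2 Y1 Y2).
  assert (hw : wf r0) by (unfold wf; simpl; lra).
  assert (hg : rg F r0).
  { intros x y h1 h2. destruct (HD x y h1 h2) as [l hl]. eapply derC_ccont; eauto. }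
  pose proof (rs_inv F r0 hw hg) as INV.
  pose proof (rs_cross F r0 hw hg) as CR.
  set (E1 := fun v => exists n, v = r1 (rs F r0 n)).
  set (E2 := fun v => exists n, v = s1 (rs F r0 n)).
  destruct (completeness E1) as [xs [xs1 xs2]].
  { exists X2. intros v [n ->]. apply (CR n O). }
  { exists X1. exists O. reflexivity. }
  destruct (completeness E2) as [ys [ys1 ys2]].
  { exists Y2. intros v [n ->]. apply (CR n O). }
  { exists Y1. exists O. reflexivity. }
  assert (HX : forall n, r1 (rs F r0 n) <= xs <= r2 (rs F r0 n)).
  { intros n. split. apply xs1. exists n; auto. apply xs2. intros v [m ->]. apply CR. }
  assert (HY : forall n, s1 (rs F r0 n) <= ys <= s2 (rs F r0 n)).
  { intros n. split. apply ys1. exists n; auto. apply ys2. intros v [m ->]. apply CR. }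
  destruct (HD xs ys) as [l hl].
  { specialize (HX O). simpl in HX. lra. }
  { specialize (HY O). simpl in HY. lra. }
  set (W := (X2 - X1) + (Y2 - Y1)).
  assert (W0 : 0 <= W) by (unfold W; lra).
  assert (KEY : forall eps, 0 < eps -> Cmod (J F X1 X2 Y1 Y2) <= 2 * eps * (W * W)).
  { intros eps Heps.
    destruct (derC_eps F _ l hl eps Heps) as [d [Hd Hball]].
    destruct (pow2_big (W / d)) as [n Hn].
    assert (p2 : 0 < 2 ^ n) by (apply pow_lt; lra).
    set (dn := W / 2 ^ n).
    assert (Hdn : dn < d).
    { unfold dn. apply Rmult_lt_reg_r with (2 ^ n / d). apply Rdiv_lt_0_compat; lra.
      replace (W / 2 ^ n * (2 ^ n / d)) with (W / d) by (field; lra).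
      replace (d * (2 ^ n / d)) with (2 ^ n) by (field; lra). exact Hn. }
    assert (dn0 : 0 <= dn) by (unfold dn; apply Rdiv_le_0_compat; lra).
    destruct (INV n) as [[w1 w2] [g [_ [_ [_ [_ [e1 [e2 e3]]]]]]]].
    set (r := rs F r0 n) in *.
    assert (Hsum : (r2 r - r1 r) + (s2 r - s1 r) = dn).
    { rewrite e1, e2. unfold dn, W. simpl. field. lra. }
    assert (Hpt : forall x y, r1 r <= x <= r2 r -> s1 r <= y <= s2 r ->
              Cmod ((x, y) - (xs, ys))%C <= dn).
    { intros x y h1 h2. eapply Rle_trans. apply Cmod_diff_l1.
      specialize (HX n). specialize (HY n). fold r in HX, HY.
      assert (Rabs (x - xs) <= r2 r - r1 r) by (apply Rabs_le; lra).
      assert (Rabs (y - ys) <= s2 r - s1 r) by (apply Rabs_le; lra). lra. }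
    set (A := fun w => ((F (xs, ys) - l * (xs, ys)) + l * w)%C).
    assert (JA : J A (r1 r) (r2 r) (s1 r) (s2 r) = 0%C) by (apply J_affine0; auto).
    assert (gA : bgood A (r1 r) (r2 r) (s1 r) (s2 r)).
    { apply rgood_bgood; auto. intros x y _ _. eapply derC_ccont. apply affine_der. }
    assert (gF : bgood F (r1 r) (r2 r) (s1 r) (s2 r)) by (apply rgood_bgood; auto).
    assert (EJ : Jr F r = J (fun w => F w - A w)%C (r1 r) (r2 r) (s1 r) (s2 r)).
    { rewrite J_minus by auto. rewrite JA. unfold Jr. ring. }
    assert (Bd : forall x y, r1 r <= x <= r2 r -> s1 r <= y <= s2 r ->
              Cmod (F (x, y) - A (x, y)) <= eps * dn).
    { intros x y h1 h2. pose proof (Hpt x y h1 h2).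
      replace (F (x, y) - A (x, y))%C with (F (x, y) - F (xs, ys) - l * ((x, y) - (xs, ys)))%C
        by (unfold A; ring).
      eapply Rle_trans. apply Hball. lra. apply Rmult_le_compat_l; lra. }
    assert (HJ : Cmod (Jr F r) <= 2 * dn * (eps * dn)).
    { rewrite EJ. rewrite <- Hsum at 1. apply J_bound; auto.
      apply bgood_minus; auto.
      - intros t Ht; split; apply Bd; lra.
      - intros t Ht; split; apply Bd; lra. }
    assert (p4 : 0 < 4 ^ n) by (apply pow_lt; lra).
    assert (HJ2 : Cmod (J F X1 X2 Y1 Y2) <= 4 ^ n * (2 * dn * (eps * dn))).
    { apply Rmult_le_reg_r with (/ 4 ^ n). apply Rinv_0_lt_compat; lra.
      replace (4 ^ n * (2 * dn * (eps * dn)) * / 4 ^ n) with (2 * dn * (eps * dn)) by (field; lra).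
      eapply Rle_trans. 2: apply HJ. exact e3. }
    eapply Rle_trans. apply HJ2. unfold dn. rewrite pow4. right. field. lra. }
  destruct (Req_dec (Cmod (J F X1 X2 Y1 Y2)) 0) as [h0|h0].
  - apply Cmod_eq_0. exact h0.
  - exfalso. pose proof (Cmod_ge_0 (J F X1 X2 Y1 Y2)).
    set (c := Cmod (J F X1 X2 Y1 Y2)) in *.
    assert (c > 0) by lra.
    assert (0 <= W * W) by nra.
    specialize (KEY (c / (4 * (W * W + 1)))).
    assert (0 < c / (4 * (W * W + 1))) by (apply Rdiv_lt_0_compat; lra).
    specialize (KEY H2).
    assert (2 * (c / (4 * (W * W + 1))) * (W * W) < c).
    { replace (2 * (c / (4 * (W * W + 1))) * (W * W)) with (c * ((W * W) / (2 * (W * W + 1)))) by (field; lra).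
      assert (W * W / (2 * (W * W + 1)) < 1).
      { apply Rmult_lt_reg_r with (2 * (W * W + 1)). lra.
        unfold Rdiv. rewrite Rmult_assoc, Rinv_l by lra. lra. }
      nra. }
    lra.
Qed.

Lemma Cmod_lower (u h : C) : Cmod u - Cmod h <= Cmod (u + h).
Proof.
  pose proof (Cmod_triangle (u + h) (- h)). replace (u + h + - h)%C with u in H by ring.
  rewrite Cmod_opp in H. lra.
Qed.

Lemma der_inv (z0 w0 : C) : w0 <> z0 ->
  is_derive (K := C_AbsRing) (V := C_NormedModule) (fun w => / (w - z0))%C w0 (- (/ ((w0 - z0) * (w0 - z0))))%C.
Proof.
  intros hne. set (u := (w0 - z0)%C).
  assert (hu : u <> 0%C). { unfold u. intros E. apply hne. apply Ceq_minus. exact E. }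
  assert (mu : 0 < Cmod u) by (apply Cmod_gt_0; auto).
  apply derC_intro. intros eps Heps.
  exists (Rmin (Cmod u / 2) (eps * (Cmod u * Cmod u * Cmod u) / 2)). split.
  { apply Rmin_pos. lra. apply Rdiv_lt_0_compat; [|lra]. apply Rmult_lt_0_compat; [auto|]. apply Rmult_lt_0_compat; [apply Rmult_lt_0_compat|]; auto. }
  intros w Hw. set (h := (w - w0)%C) in *.
  assert (hh1 : Cmod h < Cmod u / 2) by (eapply Rlt_le_trans; [apply Hw|apply Rmin_l]).
  assert (hh2 : Cmod h < eps * (Cmod u * Cmod u * Cmod u) / 2) by (eapply Rlt_le_trans; [apply Hw|apply Rmin_r]).
  assert (E : (w - z0)%C = (u + h)%C) by (unfold u, h; ring).
  pose proof (Cmod_lower u h).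
  assert (muh : Cmod u / 2 <= Cmod (u + h)) by lra.
  assert (huh : (u + h)%C <> 0%C). { intros E'. rewrite E', Cmod_0 in muh. lra. }
  rewrite E. change (w0 - z0)%C with u.
  replace (/ (u + h) - / u - - / (u * u) * h)%C with (h * h * / ((u + h) * (u * u)))%C by (field; auto).
  rewrite !Cmod_mult, Cmod_inv by (apply Cmult_neq_0; auto; apply Cmult_neq_0; auto).
  rewrite !Cmod_mult.
  pose proof (Cmod_ge_0 h).
  assert (P : 0 < Cmod (u + h) * (Cmod u * Cmod u)) by (apply Rmult_lt_0_compat; nra).
  apply Rmult_le_reg_r with (Cmod (u + h) * (Cmod u * Cmod u)); auto.
  rewrite Rmult_assoc, Rinv_l by lra. rewrite Rmult_1_r.
  assert (Cmod h <= eps * (Cmod u * Cmod u * Cmod u) / 2) by lra.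
  assert (eps * (Cmod u * Cmod u * Cmod u) / 2 <= eps * (Cmod (u + h) * (Cmod u * Cmod u))).
  { assert (0 <= eps * (Cmod u * Cmod u)) by nra. nra. }
  nra.
Qed.

Lemma ccont_inv (z0 w0 : C) : w0 <> z0 -> ccont (fun w => / (w - z0))%C w0.
Proof. intros h. eapply derC_ccont. apply der_inv. auto. Qed.

Lemma derR_pair (f1 f2 : R -> R) t d1 d2 :
  is_derive f1 t d1 -> is_derive f2 t d2 ->
  is_derive (K := R_AbsRing) (V := C_R_NormedModule) (fun s => (f1 s, f2 s) : C) t (d1, d2).
Proof.
  intros H1 H2. apply is_derive_Reals in H1. apply is_derive_Reals in H2.
  apply derR_intro. intros eps Heps.
  destruct (H1 (eps / 2)) as [e1 k1]. lra.
  destruct (H2 (eps / 2)) as [e2 k2]. lra.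
  exists (Rmin e1 e2). split. apply Rmin_pos; apply cond_pos.
  intros s Hs. destruct (Req_dec s t) as [->|hst].
  { unfold Rminus. rewrite Rplus_opp_r, Rabs_R0, Rmult_0_r.
    match goal with |- Cmod ?e <= _ => replace e with (RtoC 0) end. rewrite Cmod_0; lra.
    unfold Cminus, Cplus, Copp, Cmult, RtoC; simpl; f_equal; ring. }
  assert (hs0 : s - t <> 0) by lra.
  assert (a1 : Rabs (s - t) < e1) by (eapply Rlt_le_trans; [apply Hs|apply Rmin_l]).
  assert (a2 : Rabs (s - t) < e2) by (eapply Rlt_le_trans; [apply Hs|apply Rmin_r]).
  specialize (k1 (s - t) hs0 a1). specialize (k2 (s - t) hs0 a2).
  replace (t + (s - t)) with s in k1, k2 by ring.
  eapply Rle_trans. apply Cmod_l1. simpl.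
  assert (Rabs (f1 s + - f1 t - ((s - t) * d1 - 0 * d2)) <= eps / 2 * Rabs (s - t)).
  { replace (f1 s + - f1 t - ((s - t) * d1 - 0 * d2)) with (((f1 s - f1 t) / (s - t) - d1) * (s - t)) by (field; auto).
    rewrite Rabs_mult. apply Rmult_le_compat_r. apply Rabs_pos. lra. }
  assert (Rabs (f2 s + - f2 t - ((s - t) * d2 + 0 * d1)) <= eps / 2 * Rabs (s - t)).
  { replace (f2 s + - f2 t - ((s - t) * d2 + 0 * d1)) with (((f2 s - f2 t) / (s - t) - d2) * (s - t)) by (field; auto).
    rewrite Rabs_mult. apply Rmult_le_compat_r. apply Rabs_pos. lra. }
  unfold Rminus in *. lra.
Qed.

Definition Gw (s c : R) : C := (ln (s ^ 2 + c ^ 2) / 2, - atan (s / c)).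

Lemma side_int (u1 u2 off c : R) : c <> 0 ->
  RInt (V := C_R_CompleteNormedModule) (fun t => Cinv (t - off, c)) u1 u2 =
  Cminus (Gw (u2 - off) c) (Gw (u1 - off) c).
Proof.
  intros hc. apply (is_RInt_unique (V := C_R_CompleteNormedModule)).
  apply (is_RInt_derive (V := C_R_CompleteNormedModule) (fun t => Gw (t - off) c)).
  - intros t _. unfold Gw.
    assert (hp : 0 < (t - off) ^ 2 + c ^ 2) by (pose proof (Rsqr_pos_lt c hc); pose proof (pow2_ge_0 (t - off)); unfold Rsqr in *; replace (c ^ 2) with (c * c) by ring; lra).
    replace (Cinv (t - off, c)) with (((t - off) / ((t - off) ^ 2 + c ^ 2), - c / ((t - off) ^ 2 + c ^ 2)) : C).
    2: { unfold Cinv. simpl. reflexivity. }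
    apply derR_pair.
    + auto_derive. lra. field. lra.
    + auto_derive. auto. field. split. lra. auto.
  - intros t _.
    apply (continuous_ext (T := R_UniformSpace) (U := C_R_CompleteNormedModule)
      (fun t => (fun w => / (w - (off, Ropp c)))%C ((0, 0) + RtoC t * (1, 0))%C)).
    { intros s. f_equal. unfold Cminus, Cplus, Copp, Cmult, RtoC; simpl; f_equal; ring. }
    apply (ccont_line (fun w => / (w - (off, Ropp c)))%C). apply ccont_inv. intros E. injection E. intros. lra.
Qed.

Lemma atan_pair p q : 0 < p -> 0 < q -> atan (p / q) + atan (q / p) = PI / 2.
Proof.
  intros hp hq. replace (q / p) with (/ (p / q)) by (field; lra).
  rewrite atan_inv. ring. apply Rdiv_lt_0_compat; lra.
Qed.

Lemma wind_h (y a b x1 x2 : R) : y - b <> 0 ->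
  Hs (fun w => / (w - (a, b)))%C y x1 x2 = Cminus (Gw (x2 - a) (y - b)) (Gw (x1 - a) (y - b)).
Proof.
  intros h. unfold Hs. rewrite <- side_int by auto.
  apply (RInt_ext (V := C_R_CompleteNormedModule)). intros; reflexivity.
Qed.

Lemma wind_v (x a b y1 y2 : R) : x - a <> 0 ->
  (Ci * Vs (fun w => / (w - (a, b)))%C x y1 y2)%C = Cminus (Gw (y2 - b) (- (x - a))) (Gw (y1 - b) (- (x - a))).
Proof.
  intros h. unfold Vs. 
  assert (HE : ex_RInt (V := C_R_NormedModule) (fun t => (/ ((x, t) - (a, b)))%C) y1 y2).
  { apply (ex_RInt_v (fun w => / (w - (a, b)))%C). intros t _. apply ccont_inv. intros E. injection E. intros. lra. }
  rewrite <- (RInt_Cmult _ _ _ Ci HE).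
  rewrite <- (side_int y1 y2 b (- (x - a))) by lra.
  apply (RInt_ext (V := C_R_CompleteNormedModule)). intros t _.
  assert (0 < (x - a) ^ 2 + (t - b) ^ 2).
  { pose proof (Rsqr_pos_lt _ h). pose proof (pow2_ge_0 (t - b)). unfold Rsqr in *.
    replace ((x - a) ^ 2) with ((x - a) * (x - a)) by ring. lra. }
  unfold Cinv, Cmult, Cminus, Cplus, Copp, Ci; simpl. f_equal. field; lra. field; lra.
Qed.

Lemma wind (x1 x2 y1 y2 a b : R) : x1 < a < x2 -> y1 < b < y2 ->
  J (fun w => / (w - (a, b)))%C x1 x2 y1 y2 = ((0, 2 * PI) : C).
Proof.
  intros ha hb. unfold J.
  rewrite (wind_h y1), (wind_h y2), (wind_v x1), (wind_v x2) by lra.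
  unfold Gw, Cminus, Cplus, Copp. cbn [fst snd]. f_equal.
  - replace ((y1 - b) ^ 2 + (- (x2 - a)) ^ 2) with ((x2 - a) ^ 2 + (y1 - b) ^ 2) by ring.
    replace ((y2 - b) ^ 2 + (- (x2 - a)) ^ 2) with ((x2 - a) ^ 2 + (y2 - b) ^ 2) by ring.
    replace ((y1 - b) ^ 2 + (- (x1 - a)) ^ 2) with ((x1 - a) ^ 2 + (y1 - b) ^ 2) by ring.
    replace ((y2 - b) ^ 2 + (- (x1 - a)) ^ 2) with ((x1 - a) ^ 2 + (y2 - b) ^ 2) by ring.
    ring.
  - assert (0 < a - x1) by lra. assert (0 < x2 - a) by lra.
    assert (0 < b - y1) by lra. assert (0 < y2 - b) by lra.
    replace ((x2 - a) / (y1 - b)) with (- ((x2 - a) / (b - y1))) by (field; lra).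
    replace ((x1 - a) / (y1 - b)) with ((a - x1) / (b - y1)) by (field; lra).
    replace ((y2 - b) / - (x2 - a)) with (- ((y2 - b) / (x2 - a))) by (field; lra).
    replace ((y1 - b) / - (x2 - a)) with ((b - y1) / (x2 - a)) by (field; lra).
    replace ((x1 - a) / (y2 - b)) with (- ((a - x1) / (y2 - b))) by (field; lra).
    replace ((y2 - b) / - (x1 - a)) with ((y2 - b) / (a - x1)) by (field; lra).
    replace ((y1 - b) / - (x1 - a)) with (- ((b - y1) / (a - x1))) by (field; lra).
    rewrite !atan_opp.
    pose proof (atan_pair (x2 - a) (b - y1) ltac:(lra) ltac:(lra)).
    pose proof (atan_pair (a - x1) (b - y1) ltac:(lra) ltac:(lra)).
    pose proof (atan_pair (x2 - a) (y2 - b) ltac:(lra) ltac:(lra)).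
    pose proof (atan_pair (a - x1) (y2 - b) ltac:(lra) ltac:(lra)).
    lra.
Qed.

Lemma der_conv1 (f : C -> C) z l :
  is_derive (K := C_AbsRing) (V := C_NormedModule) f z l ->
  is_derive (K := C_AbsRing) (V := AbsRing_NormedModule C_AbsRing) f z l.
Proof.
  intros [_ H]. split. apply is_linear_scal_l. intros x Hx eps. exact (H x Hx eps).
Qed.
Lemma der_conv2 (f : C -> C) z l :
  is_derive (K := C_AbsRing) (V := AbsRing_NormedModule C_AbsRing) f z l ->
  is_derive (K := C_AbsRing) (V := C_NormedModule) f z l.
Proof.
  intros [_ H]. split. apply is_linear_scal_l. intros x Hx eps. exact (H x Hx eps).
Qed.

Lemma der_mult (F G : C -> C) z dF dG :
  is_derive (K := C_AbsRing) (V := C_NormedModule) F z dF ->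
  is_derive (K := C_AbsRing) (V := C_NormedModule) G z dG ->
  is_derive (K := C_AbsRing) (V := C_NormedModule) (fun w => F w * G w)%C z (dF * G z + F z * dG)%C.
Proof.
  intros H1 H2. apply der_conv2. exact (is_derive_mult F G z dF dG (der_conv1 _ _ _ H1) (der_conv1 _ _ _ H2) Cmult_comm).
Qed.

Lemma der_minus_const (F : C -> C) z dF c :
  is_derive (K := C_AbsRing) (V := C_NormedModule) F z dF ->
  is_derive (K := C_AbsRing) (V := C_NormedModule) (fun w => F w - c)%C z dF.
Proof.
  intros H. apply derC_intro. intros eps Heps.
  destruct (derC_eps F z dF H eps Heps) as [d [Hd Hw]]. exists d. split; auto.
  intros w Hw'. replace (F w - c - (F z - c) - dF * (w - z))%C with (F w - F z - dF * (w - z))%C by ring.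
  auto.
Qed.

Lemma split3x F x1 u v x2 y1 y2 : x1 <= u -> u <= v -> v <= x2 -> y1 <= y2 ->
  rgood F x1 x2 y1 y2 ->
  J F x1 x2 y1 y2 = (J F x1 u y1 y2 + J F u v y1 y2 + J F v x2 y1 y2)%C.
Proof.
  intros h1 h2 h3 h4 H. rewrite (J_splitx F x1 u x2) by (auto; lra).
  rewrite (J_splitx F u v x2) by (auto; try lra; apply (rgood_sub F x1 x2 y1 y2); auto; lra). ring.
Qed.

Lemma split3y F x1 x2 y1 u v y2 : y1 <= u -> u <= v -> v <= y2 -> x1 <= x2 ->
  rgood F x1 x2 y1 y2 ->
  J F x1 x2 y1 y2 = (J F x1 x2 y1 u + J F x1 x2 u v + J F x1 x2 v y2)%C.
Proof.
  intros h1 h2 h3 h4 H. rewrite (J_splity F x1 x2 y1 u y2) by (auto; lra).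
  rewrite (J_splity F x1 x2 u v y2) by (auto; try lra; apply (rgood_sub F x1 x2 y1 y2); auto; lra). ring.
Qed.

Lemma J_exc0 (G : C -> C) x1 x2 y1 y2 a b : x1 < a < x2 -> y1 < b < y2 ->
  rgood G x1 x2 y1 y2 ->
  (forall x y, x1 <= x <= x2 -> y1 <= y <= y2 -> (x, y) <> (a, b) ->
     ex_derive (K := C_AbsRing) (V := C_NormedModule) G (x, y)) ->
  J G x1 x2 y1 y2 = 0%C.
Proof.
  intros ha hb Hg HD.
  destruct (Hg a b ltac:(lra) ltac:(lra) 1 Rlt_0_1) as [d0 [Hd0 Hb0]].
  set (B := Cmod (G (a, b)) + 1).
  assert (HB : forall w, Cmod (w - (a, b)) < d0 -> Cmod (G w) <= B).
  { intros w Hw. specialize (Hb0 w Hw). unfold B.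
    replace (G w) with ((G w - G (a, b)) + G (a, b))%C by ring.
    eapply Rle_trans. apply Cmod_triangle. lra. }
  set (m := Rmin (Rmin (a - x1) (x2 - a)) (Rmin (b - y1) (y2 - b))).
  assert (hm : 0 < m) by (unfold m; repeat apply Rmin_pos; lra).
  assert (m1 : m <= a - x1 /\ m <= x2 - a /\ m <= b - y1 /\ m <= y2 - b).
  { unfold m.
    pose proof (Rmin_l (Rmin (a - x1) (x2 - a)) (Rmin (b - y1) (y2 - b))).
    pose proof (Rmin_r (Rmin (a - x1) (x2 - a)) (Rmin (b - y1) (y2 - b))).
    pose proof (Rmin_l (a - x1) (x2 - a)). pose proof (Rmin_r (a - x1) (x2 - a)).
    pose proof (Rmin_l (b - y1) (y2 - b)). pose proof (Rmin_r (b - y1) (y2 - b)).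
    repeat split; lra. }
  assert (KEY : forall e, 0 < e -> e < m -> 2 * e < d0 ->
    Cmod (J G x1 x2 y1 y2) <= 8 * e * B).
  { intros e he hem hed.
    rewrite (split3x G x1 (a - e) (a + e) x2) by (auto; lra).
    rewrite (goursat G x1 (a - e) y1 y2) by (try lra; intros x y hx hy; apply HD; try lra;
      intros E; injection E; intros; lra).
    rewrite (goursat G (a + e) x2 y1 y2) by (try lra; intros x y hx hy; apply HD; try lra;
      intros E; injection E; intros; lra).
    rewrite (split3y G (a - e) (a + e) y1 (b - e) (b + e) y2) by (try lra;
      apply (rgood_sub G x1 x2 y1 y2); auto; lra).
    rewrite (goursat G (a - e) (a + e) y1 (b - e)) by (try lra; intros x y hx hy; apply HD; try lra;
      intros E; injection E; intros; lra).
    rewrite (goursat G (a - e) (a + e) (b + e) y2) by (try lra; intros x y hx hy; apply HD; try lra;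
      intros E; injection E; intros; lra).
    replace (0 + (0 + J G (a - e) (a + e) (b - e) (b + e) + 0) + 0)%C
      with (J G (a - e) (a + e) (b - e) (b + e)) by ring.
    replace (8 * e * B) with (2 * (((a + e) - (a - e)) + ((b + e) - (b - e))) * B) by ring.
    apply J_bound; try lra.
    - apply rgood_bgood; try lra. apply (rgood_sub G x1 x2 y1 y2); auto; lra.
    - intros t Ht. split; apply HB; eapply Rle_lt_trans; try apply Cmod_diff_l1;
        rewrite !Rabs_le_between' || idtac;
        (assert (Rabs (t - a) <= e) by (apply Rabs_le; lra));
        first [assert (Rabs (b - e - b) <= e) by (apply Rabs_le; lra) | idtac];
        first [assert (Rabs (b + e - b) <= e) by (apply Rabs_le; lra) | idtac]; lra.
    - intros t Ht. split; apply HB; eapply Rle_lt_trans; try apply Cmod_diff_l1;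
        (assert (Rabs (t - b) <= e) by (apply Rabs_le; lra));
        first [assert (Rabs (a - e - a) <= e) by (apply Rabs_le; lra) | idtac];
        first [assert (Rabs (a + e - a) <= e) by (apply Rabs_le; lra) | idtac]; lra. }
  destruct (Req_dec (Cmod (J G x1 x2 y1 y2)) 0) as [h0|h0].
  - apply Cmod_eq_0. exact h0.
  - exfalso. pose proof (Cmod_ge_0 (J G x1 x2 y1 y2)).
    set (c := Cmod (J G x1 x2 y1 y2)) in *.
    assert (hB : 0 < B) by (unfold B; pose proof (Cmod_ge_0 (G (a, b))); lra).
    set (e := Rmin (Rmin (m / 2) (d0 / 4)) (c / (16 * B))).
    assert (he : 0 < e) by (unfold e; repeat apply Rmin_pos; try apply Rdiv_lt_0_compat; lra).
    assert (e1 : e <= m / 2) by (unfold e; eapply Rle_trans; [apply Rmin_l|apply Rmin_l]).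
    assert (e2 : e <= d0 / 4) by (unfold e; eapply Rle_trans; [apply Rmin_l|apply Rmin_r]).
    assert (e3 : e <= c / (16 * B)) by (unfold e; apply Rmin_r).
    specialize (KEY e he ltac:(lra) ltac:(lra)).
    assert (e * (16 * B) <= c).
    { apply Rmult_le_reg_r with (/ (16 * B)). apply Rinv_0_lt_compat; lra.
      rewrite Rmult_assoc, Rinv_r by lra. rewrite Rmult_1_r. exact e3. }
    nra.
Qed.

Definition psi (F : C -> C) (d z : C) (w : C) : C :=
  if Ceq_dec w z then d else ((F w - F z) * / (w - z))%C.

Lemma psi_der (F Fd : C -> C) d z w0 : w0 <> z ->
  is_derive (K := C_AbsRing) (V := C_NormedModule) F w0 (Fd w0) ->
  ex_derive (K := C_AbsRing) (V := C_NormedModule) (psi F d z) w0.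
Proof.
  intros hne H. eexists.
  apply (is_derive_ext_loc (K := C_AbsRing) (V := C_NormedModule) (fun w => (F w - F z) * / (w - z))%C).
  - apply (locally_norm_le_locally (K := C_AbsRing) (V := AbsRing_NormedModule C_AbsRing)).
    assert (hp : 0 < Cmod (w0 - z)).
    { apply Cmod_gt_0. intros E. apply hne. apply Ceq_minus. exact E. }
    exists (mkposreal _ hp). intros t Ht. unfold psi.
    destruct (Ceq_dec t z) as [->|]; auto.
    exfalso. unfold ball_norm in Ht. simpl in Ht. change (Cmod (z - w0) < Cmod (w0 - z)) in Ht.
    replace (z - w0)%C with (- (w0 - z))%C in Ht by ring. rewrite Cmod_opp in Ht. lra.
  - apply der_mult. apply der_minus_const. exact H. apply der_inv. auto.
Qed.

Lemma psi_ccont (F : C -> C) d z : is_derive (K := C_AbsRing) (V := C_NormedModule) F z d ->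
  ccont (psi F d z) z.
Proof.
  intros H eps Heps. destruct (derC_eps F z d H (eps / 2)) as [dl [Hd Hw]]. lra.
  exists dl. split; auto. intros w Hw'. unfold psi.
  destruct (Ceq_dec z z) as [_|]; [|congruence].
  destruct (Ceq_dec w z) as [->|hne].
  - replace (d - d)%C with (RtoC 0) by ring. rewrite Cmod_0. lra.
  - assert (hu : (w - z)%C <> 0%C) by (intros E; apply hne; apply Ceq_minus; exact E).
    assert (hp : 0 < Cmod (w - z)) by (apply Cmod_gt_0; auto).
    replace ((F w - F z) * / (w - z) - d)%C with ((F w - F z - d * (w - z)) * / (w - z))%C by (field; auto).
    rewrite Cmod_mult, Cmod_inv by auto.
    specialize (Hw w Hw').
    apply Rle_lt_trans with (eps / 2). 2: lra.
    apply Rmult_le_reg_r with (Cmod (w - z)); auto.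
    rewrite Rmult_assoc, Rinv_l by lra. lra.
Qed.

Lemma ccont_scal (G : C -> C) c z : ccont G z -> ccont (fun w => c * G w)%C z.
Proof.
  intros H eps Heps. destruct (H (eps / (Cmod c + 1))) as [d [Hd Hw]].
  { apply Rdiv_lt_0_compat; auto. pose proof (Cmod_ge_0 c); lra. }
  exists d; split; auto. intros w Hw'. specialize (Hw w Hw').
  replace (c * G w - c * G z)%C with (c * (G w - G z))%C by ring. rewrite Cmod_mult.
  pose proof (Cmod_ge_0 c). pose proof (Cmod_ge_0 (G w - G z)).
  assert (Cmod (G w - G z) * (Cmod c + 1) < eps).
  { apply Rmult_lt_reg_r with (/ (Cmod c + 1)). apply Rinv_0_lt_compat; lra.
    rewrite Rmult_assoc, Rinv_r by lra. rewrite Rmult_1_r. exact Hw. }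
  nra.
Qed.

Definition twopii : C := (0, 2 * PI).

Lemma cif (F Fd : C -> C) x1 x2 y1 y2 a b : x1 < a < x2 -> y1 < b < y2 ->
  (forall x y, x1 <= x <= x2 -> y1 <= y <= y2 -> is_derive (K := C_AbsRing) (V := C_NormedModule) F (x, y) (Fd (x, y))) ->
  J (fun w => F w * / (w - (a, b)))%C x1 x2 y1 y2 = (F (a, b) * twopii)%C.
Proof.
  intros ha hb HD.
  set (z := (a, b)).
  set (ps := psi F (Fd z) z).
  assert (Hg : rgood ps x1 x2 y1 y2).
  { intros x y hx hy. destruct (Ceq_dec (x, y) z) as [E|E].
    - rewrite E. apply psi_ccont. unfold z. apply HD; lra.
    - destruct (psi_der F Fd (Fd z) z (x, y) E (HD x y hx hy)) as [l hl].
      eapply derC_ccont. exact hl. }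
  assert (J0 : J ps x1 x2 y1 y2 = 0%C).
  { apply (J_exc0 ps x1 x2 y1 y2 a b); auto. intros x y hx hy hne.
    apply psi_der with Fd. auto. apply HD; auto. }
  assert (Hq0 : bgood (fun w => / (w - z))%C x1 x2 y1 y2).
  { split; intros t Ht; split; apply ccont_inv; intros E; unfold z in E;
      injection E; intros; lra. }
  assert (Hq : bgood (fun w => (- F z) * / (w - z))%C x1 x2 y1 y2).
  { destruct Hq0 as [h1 h2]. split; intros t Ht; split; apply ccont_scal;
      first [apply (h1 t Ht) | apply (h2 t Ht)]. }
  assert (Hpb : bgood ps x1 x2 y1 y2) by (apply rgood_bgood; auto; lra).
  rewrite (J_ext _ (fun w => ps w - (- F z) * / (w - z))%C) by (try lra;
    intros t Ht; split; unfold ps, psi; (destruct (Ceq_dec _ z) as [E|E];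
      [unfold z in E; injection E; intros; lra|]);
    field; intros E'; apply E; apply Ceq_minus; exact E').
  rewrite J_minus by (auto; lra). rewrite J_scal by (auto; lra).
  rewrite J0. unfold z. rewrite wind by auto. unfold twopii. ring.
Qed.

Definition onb x1 x2 y1 y2 (w : C) : Prop :=
  (x1 <= fst w <= x2 /\ (snd w = y1 \/ snd w = y2)) \/
  (y1 <= snd w <= y2 /\ (fst w = x1 \/ fst w = x2)).

Lemma onb_bgood F x1 x2 y1 y2 : (forall w, onb x1 x2 y1 y2 w -> ccont F w) -> bgood F x1 x2 y1 y2.
Proof.
  intros H. split; intros t Ht; split; apply H; unfold onb; simpl; auto.
Qed.

Lemma J_bound' F x1 x2 y1 y2 B : x1 <= x2 -> y1 <= y2 ->
  (forall w, onb x1 x2 y1 y2 w -> ccont F w) ->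
  (forall w, onb x1 x2 y1 y2 w -> Cmod (F w) <= B) ->
  Cmod (J F x1 x2 y1 y2) <= 2 * ((x2 - x1) + (y2 - y1)) * B.
Proof.
  intros h1 h2 Hc HB. apply J_bound; auto. apply onb_bgood; auto.
  all: intros t Ht; split; apply HB; unfold onb; simpl; auto.
Qed.

Lemma ccont_mult F G z : ccont F z -> ccont G z -> ccont (fun w => F w * G w)%C z.
Proof.
  intros hF hG eps Heps.
  set (A := Cmod (F z) + 1). set (Bg := Cmod (G z) + 1).
  assert (hA : 0 < A) by (unfold A; pose proof (Cmod_ge_0 (F z)); lra).
  assert (hB : 0 < Bg) by (unfold Bg; pose proof (Cmod_ge_0 (G z)); lra).
  set (e := Rmin 1 (eps / (A + Bg + 1))).
  assert (he : 0 < e) by (unfold e; apply Rmin_pos; [lra|apply Rdiv_lt_0_compat; lra]).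
  assert (e1 : e <= 1) by apply Rmin_l.
  assert (e2 : e <= eps / (A + Bg + 1)) by apply Rmin_r.
  destruct (hF e he) as [d1 [h1 k1]]. destruct (hG e he) as [d2 [h2 k2]].
  exists (Rmin d1 d2). split. apply Rmin_pos; auto.
  intros w Hw. assert (Cmod (w - z) < d1) by (eapply Rlt_le_trans; [apply Hw|apply Rmin_l]).
  assert (Cmod (w - z) < d2) by (eapply Rlt_le_trans; [apply Hw|apply Rmin_r]).
  specialize (k1 w H). specialize (k2 w H0).
  replace (F w * G w - F z * G z)%C with ((F w - F z) * G w + F z * (G w - G z))%C by ring.
  eapply Rle_lt_trans. apply Cmod_triangle. rewrite !Cmod_mult.
  assert (Cmod (G w) <= Bg).
  { unfold Bg. replace (G w) with ((G w - G z) + G z)%C by ring.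
    eapply Rle_trans. apply Cmod_triangle. lra. }
  pose proof (Cmod_ge_0 (F w - F z)). pose proof (Cmod_ge_0 (G w - G z)).
  pose proof (Cmod_ge_0 (F z)). pose proof (Cmod_ge_0 (G w)).
  assert (Cmod (F w - F z) * Cmod (G w) <= e * Bg) by nra.
  assert (Cmod (F z) * Cmod (G w - G z) <= A * e) by (unfold A; nra).
  assert (e * (A + Bg + 1) <= eps).
  { apply Rmult_le_reg_r with (/ (A + Bg + 1)). apply Rinv_0_lt_compat; lra.
    rewrite Rmult_assoc, Rinv_r by lra. rewrite Rmult_1_r. exact e2. }
  nra.
Qed.

Lemma J_param_deriv (F : C -> C) (K : C -> C -> C) (K' : C -> C) x1 x2 y1 y2 w0 d B M :
  x1 <= x2 -> y1 <= y2 -> 0 < d ->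
  (forall w, Cmod (w - w0) < d -> forall z, onb x1 x2 y1 y2 z -> ccont (fun u => F u * K u w)%C z) ->
  (forall z, onb x1 x2 y1 y2 z -> ccont (fun u => F u * K' u)%C z) ->
  (forall z, onb x1 x2 y1 y2 z -> Cmod (F z) <= B) ->
  (forall w, Cmod (w - w0) < d -> forall z, onb x1 x2 y1 y2 z ->
     Cmod (K z w - K z w0 - (w - w0) * K' z) <= M * (Cmod (w - w0) * Cmod (w - w0))) ->
  is_derive (K := C_AbsRing) (V := C_NormedModule)
    (fun w => J (fun u => F u * K u w)%C x1 x2 y1 y2) w0 (J (fun u => F u * K' u)%C x1 x2 y1 y2).
Proof.
  intros h1 h2 hd HK HK' HB HM.
  assert (B0 : 0 <= B).
  { eapply Rle_trans. apply Cmod_ge_0. apply (HB (x1, y1)). unfold onb; simpl; left; split; [lra|auto]. }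
  set (P := 2 * ((x2 - x1) + (y2 - y1))).
  assert (P0 : 0 <= P) by (unfold P; lra).
  set (Mp := Rmax M 0).
  assert (Mp0 : 0 <= Mp) by apply Rmax_r.
  apply derC_intro. intros eps Heps.
  exists (Rmin d (eps / (P * B * Mp + 1))). split.
  { assert (0 <= P * B * Mp) by (apply Rmult_le_pos; [apply Rmult_le_pos|]; auto). apply Rmin_pos; auto. apply Rdiv_lt_0_compat; auto. lra. }
  intros w Hw.
  assert (hw1 : Cmod (w - w0) < d) by (eapply Rlt_le_trans; [apply Hw|apply Rmin_l]).
  assert (hw2 : Cmod (w - w0) < eps / (P * B * Mp + 1)) by (eapply Rlt_le_trans; [apply Hw|apply Rmin_r]).
  assert (hw0 : Cmod (w0 - w0) < d) by (replace (w0 - w0)%C with (RtoC 0) by ring; rewrite Cmod_0; auto).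
  rewrite <- J_minus by (auto; apply onb_bgood; auto).
  rewrite (Cmult_comm (J _ x1 x2 y1 y2) (w - w0)).
  rewrite <- J_scal by (auto; apply onb_bgood; auto).
  rewrite <- J_minus.
  2, 3: auto.
  2: { apply onb_bgood. intros z hz. apply ccont_minus; auto. }
  2: { apply onb_bgood. intros z hz. apply ccont_scal; auto. }
  eapply Rle_trans.
  apply (J_bound' _ x1 x2 y1 y2 (B * (Mp * (Cmod (w - w0) * Cmod (w - w0))))); auto.
  - intros z hz. apply ccont_minus. apply ccont_minus; auto. apply ccont_scal; auto.
  - intros z hz.
    replace (F z * K z w - F z * K z w0 - (w - w0) * (F z * K' z))%C
      with (F z * (K z w - K z w0 - (w - w0) * K' z))%C by ring.
    rewrite Cmod_mult. apply Rmult_le_compat. apply Cmod_ge_0. apply Cmod_ge_0. auto.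
    eapply Rle_trans. apply HM; auto. apply Rmult_le_compat_r.
    pose proof (Cmod_ge_0 (w - w0)); nra. apply Rmax_l.
  - fold P. pose proof (Cmod_ge_0 (w - w0)).
    assert (0 <= P * B * Mp) by (apply Rmult_le_pos; [apply Rmult_le_pos|]; auto).
    assert (Cmod (w - w0) * (P * B * Mp + 1) <= eps).
    { apply Rmult_le_reg_r with (/ (P * B * Mp + 1)). apply Rinv_0_lt_compat; lra.
      rewrite Rmult_assoc, Rinv_r by lra. rewrite Rmult_1_r. lra. }
    replace (P * (B * (Mp * (Cmod (w - w0) * Cmod (w - w0))))) with
      ((P * B * Mp * Cmod (w - w0)) * Cmod (w - w0)) by ring.
    apply Rmult_le_compat_r; auto. nra.
Qed.

Lemma Cmod_sub_lower (u h : C) : Cmod u - Cmod h <= Cmod (u - h).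
Proof. unfold Cminus. pose proof (Cmod_lower u (- h)). rewrite Cmod_opp in H. exact H. Qed.

Lemma ne0_of_Cmod (u : C) : 0 < Cmod u -> u <> 0%C.
Proof. intros h E. rewrite E, Cmod_0 in h. lra. Qed.

Lemma kern1_bound (u h : C) d : 0 < d -> d <= Cmod u -> Cmod h < d / 2 ->
  Cmod (/ (u - h) - / u - h * (/ u * / u))%C <= 2 / (d * d * d) * (Cmod h * Cmod h).
Proof.
  intros hd hu hh. pose proof (Cmod_sub_lower u h). pose proof (Cmod_ge_0 h).
  assert (a1 : d / 2 <= Cmod (u - h)) by lra.
  assert (n1 : u <> 0%C) by (apply ne0_of_Cmod; lra).
  assert (n2 : (u - h)%C <> 0%C) by (apply ne0_of_Cmod; lra).
  replace (/ (u - h) - / u - h * (/ u * / u))%C with (h * h * / ((u - h) * u * u))%C by (field; auto).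
  rewrite Cmod_mult, Cmod_mult, Cmod_inv by (repeat apply Cmult_neq_0; auto).
  rewrite !Cmod_mult.
  assert (pos : 0 < Cmod (u - h) * Cmod u * Cmod u) by (repeat apply Rmult_lt_0_compat; lra).
  assert (le1 : d / 2 * d * d <= Cmod (u - h) * Cmod u * Cmod u).
  { apply Rmult_le_compat; try lra. apply Rmult_le_pos; lra. apply Rmult_le_compat; lra. }
  assert (/ (Cmod (u - h) * Cmod u * Cmod u) <= / (d / 2 * d * d)).
  { apply Rinv_le_contravar; auto. repeat apply Rmult_lt_0_compat; lra. }
  replace (2 / (d * d * d)) with (/ (d / 2 * d * d)) by (field; lra).
  rewrite (Rmult_comm (/ (d / 2 * d * d))). apply Rmult_le_compat_l. nra. auto.
Qed.

Lemma kern2_bound (u h : C) d : 0 < d -> d <= Cmod u -> Cmod h < d / 2 ->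
  Cmod (/ (u - h) * / (u - h) - / u * / u - h * (/ u * / u * / u + / u * / u * / u))%C
    <= 16 / (d * d * d * d) * (Cmod h * Cmod h).
Proof.
  intros hd hu hh. pose proof (Cmod_sub_lower u h). pose proof (Cmod_ge_0 h).
  assert (a1 : Cmod u / 2 <= Cmod (u - h)) by lra.
  assert (n1 : u <> 0%C) by (apply ne0_of_Cmod; lra).
  assert (n2 : (u - h)%C <> 0%C) by (apply ne0_of_Cmod; lra).
  replace (/ (u - h) * / (u - h) - / u * / u - h * (/ u * / u * / u + / u * / u * / u))%C
    with (h * h * (u + u + u - h - h) * / ((u - h) * (u - h) * (u * u * u)))%C by (field; auto).
  rewrite Cmod_mult, Cmod_mult, Cmod_inv by (repeat apply Cmult_neq_0; auto).
  rewrite !Cmod_mult.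
  assert (t1 : Cmod (u + u + u - h - h) <= 4 * Cmod u).
  { pose proof (Cmod_sub_le (u + u + u - h) h). pose proof (Cmod_sub_le (u + u + u) h).
    pose proof (Cmod_triangle (u + u) u). pose proof (Cmod_triangle u u). lra. }
  set (U := Cmod u) in *. set (V := Cmod (u - h)) in *. set (Hh := Cmod h) in *.
  pose proof (Cmod_ge_0 (u + u + u - h - h)).
  assert (U0 : 0 < U) by lra.
  assert (pos : 0 < V * V * (U * U * U)) by (repeat apply Rmult_lt_0_compat; lra).
  assert (le1 : U / 2 * (U / 2) * (U * U * U) <= V * V * (U * U * U)).
  { apply Rmult_le_compat_r. repeat apply Rmult_le_pos; lra. apply Rmult_le_compat; lra. }
  apply Rle_trans with (Hh * Hh * (4 * U) * / (U / 2 * (U / 2) * (U * U * U))).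
  { apply Rmult_le_compat. apply Rmult_le_pos. nra. auto. left; apply Rinv_0_lt_compat; auto.
    apply Rmult_le_compat_l; nra. apply Rinv_le_contravar; auto.
    repeat apply Rmult_lt_0_compat; lra. }
  replace (Hh * Hh * (4 * U) * / (U / 2 * (U / 2) * (U * U * U))) with (16 / (U * U * U * U) * (Hh * Hh)) by (field; lra).
  apply Rmult_le_compat_r. nra.
  unfold Rdiv. apply Rmult_le_compat_l. lra. apply Rinv_le_contravar.
  repeat apply Rmult_lt_0_compat; lra.
  apply Rmult_le_compat; try (repeat apply Rmult_le_pos); try lra.
  apply Rmult_le_compat; try (repeat apply Rmult_le_pos); try lra.
  apply Rmult_le_compat; lra.
Qed.

Definition Jq F (z : C) s := J F (fst z - s) (fst z + s) (snd z - s) (snd z + s).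
Definition onq (z : C) s w := onb (fst z - s) (fst z + s) (snd z - s) (snd z + s) w.

Lemma onq_far z s w : 0 < s -> onq z s w -> s <= Cmod (w - z).
Proof.
  intros hs H. pose proof (Rmax_Cmod (w - z)%C) as HM. destruct z as [a b], w as [x y].
  unfold onq, onb in H. simpl in H.
  assert (HX : Rabs (x - a) <= Cmod ((x, y) - (a, b))%C).
  { eapply Rle_trans; [|apply HM]. apply Rmax_l. }
  assert (HY : Rabs (y - b) <= Cmod ((x, y) - (a, b))%C).
  { eapply Rle_trans; [|apply HM]. apply Rmax_r. }
  destruct H as [[_ [E| E]]|[_ [E| E]]]; subst.
  - replace (b - s - b) with (- s) in HY by ring. rewrite Rabs_Ropp, Rabs_right in HY by lra. lra.
  - replace (b + s - b) with s in HY by ring. rewrite Rabs_right in HY by lra. lra.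
  - replace (a - s - a) with (- s) in HX by ring. rewrite Rabs_Ropp, Rabs_right in HX by lra. lra.
  - replace (a + s - a) with s in HX by ring. rewrite Rabs_right in HX by lra. lra.
Qed.

Lemma inq_near z s x y : fst z - s <= x <= fst z + s -> snd z - s <= y <= snd z + s ->
  Cmod ((x, y) - z) <= 2 * s.
Proof.
  intros hx hy. destruct z as [a b]. simpl in *. eapply Rle_trans. apply Cmod_diff_l1.
  assert (Rabs (x - a) <= s) by (apply Rabs_le; lra).
  assert (Rabs (y - b) <= s) by (apply Rabs_le; lra). lra.
Qed.

Lemma onq_in z s w : onq z s w -> fst z - s <= fst w <= fst z + s /\ snd z - s <= snd w <= snd z + s.
Proof. unfold onq, onb. intros [[h [->| ->]]|[h [->| ->]]]; split; auto; lra. Qed.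

Lemma Cmod_diff_ge (a b c : C) : Cmod (a - c) - Cmod (b - c) <= Cmod (a - b).
Proof. pose proof (Cmod_sub_lower (a - c) (b - c)). replace (a - c - (b - c))%C with (a - b)%C in H by ring. exact H. Qed.

Lemma der_scal_r (f : C -> C) z l c : is_derive (K := C_AbsRing) (V := C_NormedModule) f z l ->
  is_derive (K := C_AbsRing) (V := C_NormedModule) (fun w => f w * c)%C z (l * c)%C.
Proof.
  intros H. apply derC_intro. intros eps Heps.
  destruct (derC_eps f z l H (eps / (Cmod c + 1))) as [d [Hd Hw]].
  { apply Rdiv_lt_0_compat; auto. pose proof (Cmod_ge_0 c); lra. }
  exists d; split; auto. intros w Hw'. specialize (Hw w Hw').
  replace (f w * c - f z * c - l * c * (w - z))%C with ((f w - f z - l * (w - z)) * c)%C by ring.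
  rewrite Cmod_mult. pose proof (Cmod_ge_0 c). pose proof (Cmod_ge_0 (w - z)).
  pose proof (Cmod_ge_0 (f w - f z - l * (w - z))).
  apply Rle_trans with (eps / (Cmod c + 1) * Cmod (w - z) * (Cmod c + 1)).
  { apply Rmult_le_compat; lra. }
  right. field. lra.
Qed.

Lemma Cmod_twopii : Cmod twopii = 2 * PI.
Proof.
  unfold twopii, Cmod. simpl. replace (0 * (0 * 1) + 2 * PI * (2 * PI * 1)) with ((2 * PI) ^ 2) by ring.
  apply sqrt_pow2. pose proof PI_RGT_0. lra.
Qed.

Lemma twopii_ne0 : twopii <> 0%C.
Proof. apply ne0_of_Cmod. rewrite Cmod_twopii. pose proof PI_RGT_0. lra. Qed.

Lemma fst_le_Cmod (v : C) : Rabs (fst v) <= Cmod v.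
Proof. eapply Rle_trans; [|apply Rmax_Cmod]. apply Rmax_l. Qed.
Lemma snd_le_Cmod (v : C) : Rabs (snd v) <= Cmod v.
Proof. eapply Rle_trans; [|apply Rmax_Cmod]. apply Rmax_r. Qed.

Lemma Cmod_tri3 (a b : C) : Cmod a <= Cmod b + Cmod (a - b).
Proof. replace a with (b + (a - b))%C at 1 by ring. apply Cmod_triangle. Qed.

Lemma sq_disk z s x y : Cmod z + 2 * s < 1 ->
  fst z - s <= x <= fst z + s -> snd z - s <= y <= snd z + s -> in_disk (x, y).
Proof.
  intros h hx hy. unfold in_disk. pose proof (inq_near z s x y hx hy).
  pose proof (Cmod_tri3 (x, y) z). lra.
Qed.

Lemma inside_sq z s w : Cmod (w - z) < s -> fst z - s < fst w < fst z + s /\ snd z - s < snd w < snd z + s.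
Proof.
  intros h. pose proof (fst_le_Cmod (w - z)%C). pose proof (snd_le_Cmod (w - z)%C).
  destruct w as [x y], z as [a b]. simpl in *.
  assert (h1 : Rabs (x + - a) < s) by lra. assert (h2 : Rabs (y + - b) < s) by lra.
  apply Rabs_def2 in h1. apply Rabs_def2 in h2. lra.
Qed.

Lemma Cmod_tri_mid (a b c : C) : Cmod (a - c) <= Cmod (a - b) + Cmod (b - c).
Proof. replace (a - c)%C with ((a - b) + (b - c))%C by ring. apply Cmod_triangle. Qed.
Lemma Cmod_sym (a b : C) : Cmod (a - b) = Cmod (b - a).
Proof. replace (a - b)%C with (- (b - a))%C by ring. apply Cmod_opp. Qed.

Lemma onq_disk z s w : Cmod z + 2 * s < 1 -> onq z s w -> in_disk w.
Proof. intros h H. destruct (onq_in z s w H). destruct w. apply (sq_disk z s); auto. Qed.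

Lemma sq_formula (F Fd : C -> C) z s B :
  (forall w, in_disk w -> is_derive (K := C_AbsRing) (V := C_NormedModule) F w (Fd w)) ->
  0 < s -> Cmod z + 2 * s < 1 ->
  (forall w, onq z s w -> Cmod (F w) <= B) ->
  forall w, Cmod (w - z) < s / 2 ->
  (Fd w * twopii)%C = Jq (fun u => F u * (/ (u - w) * / (u - w)))%C z s.
Proof.
  intros HF hs hz HB w hw.
  assert (H1 : forall w', Cmod (w' - z) < s / 2 ->
     Jq (fun u => F u * / (u - w'))%C z s = (F w' * twopii)%C).
  { intros w' hw'. destruct (inside_sq z s w') as [i1 i2]. lra.
    destruct w' as [a' b']. unfold Jq. apply cif with Fd; simpl in *; try lra.
    intros x y hx hy. apply HF. apply (sq_disk z s); auto. }
  assert (Fc : forall u, onq z s u -> ccont F u).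
  { intros u hu. eapply derC_ccont. apply HF. eapply onq_disk; eauto. }
  assert (H2 : is_derive (K := C_AbsRing) (V := C_NormedModule)
     (fun w' => Jq (fun u => F u * / (u - w'))%C z s) w (Jq (fun u => F u * (/ (u - w) * / (u - w)))%C z s)).
  { unfold Jq.
    apply (J_param_deriv F (fun u w' => / (u - w'))%C (fun u => / (u - w) * / (u - w))%C _ _ _ _ w (s / 4) B
             (2 / (s / 2 * (s / 2) * (s / 2)))); try lra.
    - intros w' hw' u hu. apply ccont_mult. auto. apply ccont_inv.
      intros E. subst u. pose proof (onq_far z s w' hs hu).
      pose proof (Cmod_tri_mid w' w z). lra.
    - intros u hu. apply ccont_mult. auto. apply ccont_mult; apply ccont_inv;
      intros E; subst u; pose proof (onq_far z s w hs hu); lra.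
    - exact HB.
    - intros w' hw' u hu. pose proof (onq_far z s u hs hu).
      pose proof (Cmod_tri_mid u w z). pose proof (Cmod_sym w z).
      replace (u - w')%C with ((u - w) - (w' - w))%C by ring.
      apply kern1_bound; lra. }
  assert (H3 : is_derive (K := C_AbsRing) (V := C_NormedModule)
     (fun w' => F w' * twopii)%C w (Jq (fun u => F u * (/ (u - w) * / (u - w)))%C z s)).
  { apply (is_derive_ext_loc (K := C_AbsRing) (V := C_NormedModule) (fun w' => Jq (fun u => F u * / (u - w'))%C z s)).
    - apply (locally_norm_le_locally (K := C_AbsRing) (V := AbsRing_NormedModule C_AbsRing)).
      assert (hp : 0 < s / 2 - Cmod (w - z)) by lra.
      exists (mkposreal _ hp). intros t Ht. apply H1.
      change (Cmod (t - w) < s / 2 - Cmod (w - z)) in Ht.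
      pose proof (Cmod_tri_mid t w z). lra.
    - exact H2. }
  assert (H4 : is_derive (K := C_AbsRing) (V := C_NormedModule) (fun w' => F w' * twopii)%C w (Fd w * twopii)%C).
  { apply der_scal_r. apply HF. unfold in_disk. pose proof (Cmod_tri3 w z). lra. }
  rewrite <- (is_C_derive_unique _ _ _ H4). apply is_C_derive_unique. exact H3.
Qed.

Lemma onq_corner z s : 0 < s -> onq z s (fst z - s, snd z - s).
Proof. intros hs. unfold onq, onb. simpl. left. split. lra. auto. Qed.

Lemma holo_est (F Fd : C -> C) z s B :
  (forall w, in_disk w -> is_derive (K := C_AbsRing) (V := C_NormedModule) F w (Fd w)) ->
  0 < s -> Cmod z + 2 * s < 1 ->
  (forall w, onq z s w -> Cmod (F w) <= B) ->
  Cmod (Fd z) <= 8 * B / s.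
Proof.
  intros HF hs hz HB.
  assert (B0 : 0 <= B) by (eapply Rle_trans; [apply Cmod_ge_0|apply (HB _ (onq_corner z s hs))]).
  assert (hzz : Cmod (z - z) < s / 2).
  { replace (z - z)%C with (RtoC 0) by ring. rewrite Cmod_0. lra. }
  assert (E := sq_formula F Fd z s B HF hs hz HB z hzz).
  assert (Fc : forall u, onq z s u -> ccont F u).
  { intros u hu. eapply derC_ccont. apply HF. eapply onq_disk; eauto. }
  assert (JB : Cmod (Jq (fun u => F u * (/ (u - z) * / (u - z)))%C z s) <= 2 * ((fst z + s - (fst z - s)) + (snd z + s - (snd z - s))) * (B * (/ s * / s))).
  { unfold Jq. apply J_bound'; try lra.
    - intros u hu. apply ccont_mult. auto. apply ccont_mult; apply ccont_inv;
      intros E'; subst u; pose proof (onq_far z s z hs hu);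
      replace (z - z)%C with (RtoC 0) in H by ring; rewrite Cmod_0 in H; lra.
    - intros u hu. pose proof (onq_far z s u hs hu).
      assert (hn : (u - z)%C <> 0%C) by (apply ne0_of_Cmod; lra).
      rewrite !Cmod_mult, !Cmod_inv by auto.
      apply Rmult_le_compat. apply Cmod_ge_0. apply Rmult_le_pos; left; apply Rinv_0_lt_compat; lra.
      auto. apply Rmult_le_compat; try (left; apply Rinv_0_lt_compat; lra);
      apply Rinv_le_contravar; lra. }
  rewrite <- E, Cmod_mult, Cmod_twopii in JB.
  pose proof (Cmod_ge_0 (Fd z)). pose proof PI2_1.
  replace (2 * (fst z + s - (fst z - s) + (snd z + s - (snd z - s))) * (B * (/ s * / s))) with (8 * B / s) in JB by (field; lra).
  nra.
Qed.

Lemma holo_Fd_diff (F Fd : C -> C) :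
  (forall w, in_disk w -> is_derive (K := C_AbsRing) (V := C_NormedModule) F w (Fd w)) ->
  (forall r, r < 1 -> exists B, forall w, Cmod w <= r -> Cmod (F w) <= B) ->
  forall z, in_disk z -> ex_derive (K := C_AbsRing) (V := C_NormedModule) Fd z.
Proof.
  intros HF HBd z hz0. unfold in_disk in hz0.
  set (s := (1 - Cmod z) / 4).
  assert (hs : 0 < s) by (unfold s; lra).
  assert (hz : Cmod z + 2 * s < 1) by (unfold s; lra).
  destruct (HBd (Cmod z + 2 * s) hz) as [B HB0].
  assert (HB : forall w, onq z s w -> Cmod (F w) <= B).
  { intros w hw. apply HB0. destruct (onq_in z s w hw). destruct w as [x y].
    pose proof (inq_near z s x y H H0). pose proof (Cmod_tri3 (x, y) z). lra. }
  assert (Fc : forall u, onq z s u -> ccont F u).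
  { intros u hu. eapply derC_ccont. apply HF. eapply onq_disk; eauto. }
  assert (D : is_derive (K := C_AbsRing) (V := C_NormedModule)
     (fun w => Jq (fun u => F u * (/ (u - w) * / (u - w)))%C z s) z
     (Jq (fun u => F u * (/ (u - z) * / (u - z) * / (u - z) + / (u - z) * / (u - z) * / (u - z)))%C z s)).
  { unfold Jq.
    apply (J_param_deriv F (fun u w => / (u - w) * / (u - w))%C
      (fun u => / (u - z) * / (u - z) * / (u - z) + / (u - z) * / (u - z) * / (u - z))%C _ _ _ _ z (s / 2) B
      (16 / (s * s * s * s))); try lra.
    - intros w hw u hu. pose proof (onq_far z s u hs hu).
      assert (u <> w) by (intros E; subst u; lra).
      apply ccont_mult. auto. apply ccont_mult; apply ccont_inv; auto.
    - intros u hu. pose proof (onq_far z s u hs hu).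
      assert (u <> z) by (intros E; subst u; replace (z - z)%C with (RtoC 0) in H by ring; rewrite Cmod_0 in H; lra).
      apply ccont_mult. auto.
      assert (ccont (fun u0 => / (u0 - z))%C u) by (apply ccont_inv; auto).
      assert (ccont (fun u0 => / (u0 - z) * / (u0 - z) * / (u0 - z))%C u) by
        (repeat apply ccont_mult; auto).
      intros eps Heps. destruct (H2 (eps / 2)) as [d [hd hw]]. lra.
      exists d; split; auto. intros w hw'. specialize (hw w hw').
      match goal with |- Cmod ?e < _ => replace e with
        ((/ (w - z) * / (w - z) * / (w - z) - / (u - z) * / (u - z) * / (u - z)) +
         (/ (w - z) * / (w - z) * / (w - z) - / (u - z) * / (u - z) * / (u - z)))%C by ring end.
      eapply Rle_lt_trans. apply Cmod_triangle. lra.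
    - exact HB.
    - intros w hw u hu. pose proof (onq_far z s u hs hu).
      replace (u - w)%C with ((u - z) - (w - z))%C by ring.
      apply kern2_bound; lra. }
  eexists.
  apply (is_derive_ext_loc (K := C_AbsRing) (V := C_NormedModule)
    (fun w => Jq (fun u => F u * (/ (u - w) * / (u - w)))%C z s * / twopii)%C).
  - apply (locally_norm_le_locally (K := C_AbsRing) (V := AbsRing_NormedModule C_AbsRing)).
    assert (hp : 0 < s / 2) by lra.
    exists (mkposreal _ hp). intros t Ht.
    change (Cmod (t - z) < s / 2) in Ht.
    rewrite <- (sq_formula F Fd z s B HF hs hz HB t Ht).
    change (Cmult (Cmult (Fd t) twopii) (Cinv twopii) = Fd t). field. apply twopii_ne0.
  - apply der_scal_r. exact D.
Qed.

Lemma RInt_swapC (f : R -> C) a b : ex_RInt (V := C_R_NormedModule) f a b ->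
  RInt (V := C_R_CompleteNormedModule) f b a = (- RInt (V := C_R_CompleteNormedModule) f a b)%C.
Proof. intros H. symmetry. exact (opp_RInt_swap (V := C_R_CompleteNormedModule) f a b H). Qed.

Lemma Cmod_RInt_abs (f : R -> C) a b B : ex_RInt (V := C_R_NormedModule) f a b ->
  (forall t, Rmin a b <= t <= Rmax a b -> Cmod (f t) <= B) ->
  Cmod (RInt (V := C_R_CompleteNormedModule) f a b) <= Rabs (b - a) * B.
Proof.
  intros Hf HB. destruct (Rle_or_lt a b) as [h|h].
  - destruct (mm _ _ h) as [e1 e2]. rewrite Rabs_right by lra.
    apply Cmod_RInt_le; auto. intros t Ht; apply HB; lra.
  - rewrite Rmin_right, Rmax_left in HB by lra.
    rewrite (RInt_swapC f b a). rewrite Cmod_opp.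
    replace (Rabs (b - a)) with (a - b) by (rewrite Rabs_left by lra; ring).
    apply Cmod_RInt_le; auto. lra. apply (ex_RInt_swap (V := C_R_NormedModule)); auto.
    apply (ex_RInt_swap (V := C_R_NormedModule)); auto.
Qed.

Lemma J_swapx F x1 x2 y1 y2 :
  ex_RInt (V := C_R_NormedModule) (fun t => F (t, y1)) x1 x2 ->
  ex_RInt (V := C_R_NormedModule) (fun t => F (t, y2)) x1 x2 ->
  J F x2 x1 y1 y2 = (- J F x1 x2 y1 y2)%C.
Proof. intros H1 H2. unfold J, Hs. rewrite !(RInt_swapC _ x1 x2) by auto. ring. Qed.

Lemma J_swapy F x1 x2 y1 y2 :
  ex_RInt (V := C_R_NormedModule) (fun t => F (x1, t)) y1 y2 ->
  ex_RInt (V := C_R_NormedModule) (fun t => F (x2, t)) y1 y2 ->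
  J F x1 x2 y2 y1 = (- J F x1 x2 y1 y2)%C.
Proof. intros H1 H2. unfold J, Vs. rewrite !(RInt_swapC _ y1 y2) by auto. ring. Qed.

Lemma J_any F a1 a2 b1 b2 :
  (forall x y, Rmin a1 a2 <= x <= Rmax a1 a2 -> Rmin b1 b2 <= y <= Rmax b1 b2 ->
     ex_derive (K := C_AbsRing) (V := C_NormedModule) F (x, y)) ->
  J F a1 a2 b1 b2 = 0%C.
Proof.
  intros HD.
  assert (Hc : forall x y, Rmin a1 a2 <= x <= Rmax a1 a2 -> Rmin b1 b2 <= y <= Rmax b1 b2 -> ccont F (x, y)).
  { intros x y hx hy. destruct (HD x y hx hy) as [l hl]. eapply derC_ccont; eauto. }
  pose proof (Rmin_l a1 a2). pose proof (Rmin_r a1 a2). pose proof (Rmax_l a1 a2). pose proof (Rmax_r a1 a2).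
  pose proof (Rmin_l b1 b2). pose proof (Rmin_r b1 b2). pose proof (Rmax_l b1 b2). pose proof (Rmax_r b1 b2).
  assert (Ih : forall y, Rmin b1 b2 <= y <= Rmax b1 b2 -> ex_RInt (V := C_R_NormedModule) (fun t => F (t, y)) a1 a2).
  { intros y hy. apply ex_RInt_h. intros t ht. apply Hc; auto. }
  assert (Iv : forall x, Rmin a1 a2 <= x <= Rmax a1 a2 -> ex_RInt (V := C_R_NormedModule) (fun t => F (x, t)) b1 b2).
  { intros x hx. apply ex_RInt_v. intros t ht. apply Hc; auto. }
  assert (G : forall x1 x2 y1 y2, x1 <= x2 -> y1 <= y2 -> Rmin a1 a2 = x1 -> Rmax a1 a2 = x2 ->
     Rmin b1 b2 = y1 -> Rmax b1 b2 = y2 -> J F x1 x2 y1 y2 = 0%C).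
  { intros x1 x2 y1 y2 h1 h2 e1 e2 e3 e4. apply goursat; auto.
    intros x y hx hy. apply HD; lra. }
  destruct (Rle_or_lt a1 a2) as [ha|ha]; destruct (Rle_or_lt b1 b2) as [hb|hb].
  - apply G; auto; [apply Rmin_left|apply Rmax_right|apply Rmin_left|apply Rmax_right]; lra.
  - rewrite J_swapy. rewrite G; auto; try lra. ring.
    apply Rmin_left; lra. apply Rmax_right; lra. apply Rmin_right; lra. apply Rmax_left; lra.
    apply (ex_RInt_swap (V := C_R_NormedModule)). apply Iv; lra.
    apply (ex_RInt_swap (V := C_R_NormedModule)). apply Iv; lra.
  - rewrite J_swapx. rewrite G; auto; try lra. ring.
    apply Rmin_right; lra. apply Rmax_left; lra. apply Rmin_left; lra. apply Rmax_right; lra.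
    apply (ex_RInt_swap (V := C_R_NormedModule)). apply Ih; lra.
    apply (ex_RInt_swap (V := C_R_NormedModule)). apply Ih; lra.
  - rewrite J_swapx. rewrite J_swapy. rewrite G; auto; try lra. ring.
    apply Rmin_right; lra. apply Rmax_left; lra. apply Rmin_right; lra. apply Rmax_left; lra.
    all: apply (ex_RInt_swap (V := C_R_NormedModule)).
    all: first [apply Ih; lra | apply Iv; lra | idtac].
Qed.

Definition Hprim (h : C -> C) (z : C) : C := (Hs h 0 0 (fst z) + Ci * Vs h (fst z) 0 (snd z))%C.

Lemma Cmod_mono_snd t s y : Rabs s <= Rabs y -> Cmod (t, s) <= Cmod (t, y).
Proof.
  intros h. unfold Cmod. cbn [fst snd]. apply sqrt_le_1_alt.
  rewrite <- (pow2_abs s), <- (pow2_abs y). pose proof (Rabs_pos s). nra.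
Qed.
Lemma Cmod_mono_fst t s x : Rabs t <= Rabs x -> Cmod (t, s) <= Cmod (x, s).
Proof.
  intros h. unfold Cmod. cbn [fst snd]. apply sqrt_le_1_alt.
  rewrite <- (pow2_abs t), <- (pow2_abs x). pose proof (Rabs_pos t). nra.
Qed.
Lemma Cmod_shift_fst t x y : Cmod (t, y) <= Cmod (x, y) + Rabs (t - x).
Proof.
  pose proof (Cmod_tri3 (t, y) (x, y)).
  replace ((t, y) - (x, y))%C with (RtoC (t - x)) in H by (unfold Cminus, Cplus, Copp, RtoC; simpl; f_equal; ring).
  rewrite Cmod_R in H. exact H.
Qed.
Lemma Cmod_shift_snd t x y : Cmod (x, t) <= Cmod (x, y) + Rabs (t - y).
Proof.
  pose proof (Cmod_tri3 (x, t) (x, y)).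
  replace ((x, t) - (x, y))%C with (Ci * RtoC (t - y))%C in H by (unfold Cminus, Cplus, Copp, Cmult, Ci, RtoC; simpl; f_equal; ring).
  rewrite Cmod_Ci_mult, Cmod_R in H. exact H.
Qed.

Lemma between_abs a b t : Rmin a b <= t <= Rmax a b -> Rabs (t - a) <= Rabs (b - a).
Proof.
  intros h. destruct (Rle_or_lt a b).
  - rewrite Rmin_left, Rmax_right in h by lra. rewrite !Rabs_right by lra. lra.
  - rewrite Rmin_right, Rmax_left in h by lra. rewrite !Rabs_left1 by lra. lra.
Qed.
Lemma between0_abs b t : Rmin 0 b <= t <= Rmax 0 b -> Rabs t <= Rabs b.
Proof. intros h. pose proof (between_abs 0 b t h). rewrite !Rminus_0_r in H. exact H. Qed.

Lemma RtoC_split (x y x' y' : R) : ((x', y') - (x, y))%C = (RtoC (x' - x) + Ci * RtoC (y' - y))%C.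
Proof. unfold Cminus, Cplus, Copp, Cmult, Ci, RtoC; simpl; f_equal; ring. Qed.

Lemma RInt_const_C (c : C) a b : RInt (V := C_R_CompleteNormedModule) (fun _ => c) a b = (RtoC (b - a) * c)%C.
Proof. rewrite (RInt_const (V := C_R_CompleteNormedModule)). apply scalCR. Qed.

Lemma Hprim_der (h : C -> C) :
  (forall w, in_disk w -> ex_derive (K := C_AbsRing) (V := C_NormedModule) h w) ->
  forall z, in_disk z -> is_derive (K := C_AbsRing) (V := C_NormedModule) (Hprim h) z (h z).
Proof.
  intros Hh z hz. unfold in_disk in hz.
  assert (Hc : forall w, in_disk w -> ccont h w).
  { intros w hw. destruct (Hh w hw) as [l hl]. eapply derC_ccont; eauto. }
  destruct z as [x y]. set (m := Cmod (x, y)) in *.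
  apply derC_intro. intros eps Heps.
  destruct (Hc (x, y) hz (eps / 2)) as [d1 [hd1 Hd1]]. lra.
  exists (Rmin (d1 / 2) ((1 - m) / 3)). split. apply Rmin_pos; lra.
  intros [x' y'] Hw. set (e := Cmod ((x', y') - (x, y))%C) in *.
  assert (he1 : e < d1 / 2) by (eapply Rlt_le_trans; [apply Hw|apply Rmin_l]).
  assert (he2 : e < (1 - m) / 3) by (eapply Rlt_le_trans; [apply Hw|apply Rmin_r]).
  assert (ex : Rabs (x' - x) <= e) by apply (fst_le_Cmod ((x', y') - (x, y))%C).
  assert (ey : Rabs (y' - y) <= e) by apply (snd_le_Cmod ((x', y') - (x, y))%C).
  pose proof (Cmod_ge_0 ((x', y') - (x, y))%C) as e0. fold e in e0.
  assert (D1 : forall t s, Rmin x x' <= t <= Rmax x x' -> Rabs s <= Rabs y -> in_disk (t, s)).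
  { intros t s ht hs. unfold in_disk. pose proof (Cmod_mono_snd t s y hs).
    pose proof (Cmod_shift_fst t x y). pose proof (between_abs x x' t ht). fold m in H0. lra. }
  assert (D2 : forall t, Rmin y y' <= t <= Rmax y y' -> in_disk (x', t)).
  { intros t ht. unfold in_disk. pose proof (Cmod_shift_fst x' x t).
    pose proof (Cmod_shift_snd t x y). pose proof (between_abs y y' t ht). fold m in H0. lra. }
  assert (D3 : forall t, Rmin 0 x <= t <= Rmax 0 x -> in_disk (t, 0)).
  { intros t ht. unfold in_disk. pose proof (between0_abs x t ht).
    pose proof (Cmod_mono_snd t 0 y ltac:(rewrite Rabs_R0; apply Rabs_pos)).
    pose proof (Cmod_mono_fst t y x H). fold m in H1. lra. }
  assert (D4 : forall t, Rmin 0 y <= t <= Rmax 0 y -> in_disk (x, t)).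
  { intros t ht. unfold in_disk. pose proof (between0_abs y t ht).
    pose proof (Cmod_mono_snd x t y H). fold m in H0. lra. }
  assert (D5 : forall t, Rmin x x' <= t <= Rmax x x' -> in_disk (t, 0)).
  { intros t ht. apply D1; auto. rewrite Rabs_R0. apply Rabs_pos. }
  assert (D6 : forall t, Rmin 0 y <= t <= Rmax 0 y -> in_disk (x', t)).
  { intros t ht. apply D1. pose proof (Rmin_l x x'). pose proof (Rmax_r x x'). pose proof (Rmin_r x x'). lra.
    apply between0_abs; auto. }
  assert (E1 : Hs h 0 0 x' = (Hs h 0 0 x + Hs h 0 x x')%C).
  { unfold Hs. apply RInt_Chasles_C; apply ex_RInt_h; intros t ht; apply Hc; auto. }
  assert (E2 : Vs h x' 0 y' = (Vs h x' 0 y + Vs h x' y y')%C).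
  { unfold Vs. apply RInt_Chasles_C; apply ex_RInt_v; intros t ht; apply Hc; auto. }
  assert (E3 : J h x x' 0 y = 0%C).
  { apply J_any. intros a b ha hb. apply Hh. apply D1; auto. apply between0_abs; auto. }
  unfold J in E3.
  assert (E4 : (Hprim h (x', y') - Hprim h (x, y))%C = (Hs h y x x' + Ci * Vs h x' y y')%C).
  { unfold Hprim; simpl. rewrite E1, E2.
    transitivity (Hs h y x x' + Ci * Vs h x' y y' + (Hs h 0 x x' + Ci * Vs h x' 0 y - Hs h y x x' - Ci * Vs h x 0 y))%C.
    ring. rewrite E3. ring. }
  assert (P1 : forall t, Cmod ((t, y) - (x, y))%C = Rabs (t - x)).
  { intros t. replace ((t, y) - (x, y))%C with (RtoC (t - x)) by (unfold Cminus, Cplus, Copp, RtoC; simpl; f_equal; ring).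
    apply Cmod_R. }
  assert (P2 : forall t, Cmod ((x', t) - (x, y))%C <= Rabs (x' - x) + Rabs (t - y)).
  { intros t. apply Cmod_diff_l1. }
  assert (A1 : Cmod (Hs h y x x' - RtoC (x' - x) * h (x, y))%C <= Rabs (x' - x) * (eps / 2)).
  { rewrite <- RInt_const_C. unfold Hs. rewrite <- RInt_Cminus.
    - apply Cmod_RInt_abs.
      + apply (ex_RInt_minus (V := C_R_NormedModule)).
        apply ex_RInt_h; intros t ht; apply Hc; apply D1; auto; lra.
        apply ex_RInt_const.
      + intros t ht. left. apply Hd1. rewrite P1. pose proof (between_abs x x' t ht). lra.
    - apply ex_RInt_h; intros t ht; apply Hc; apply D1; auto; lra.
    - apply ex_RInt_const. }
  assert (A2 : Cmod (Vs h x' y y' - RtoC (y' - y) * h (x, y))%C <= Rabs (y' - y) * (eps / 2)).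
  { rewrite <- RInt_const_C. unfold Vs. rewrite <- RInt_Cminus.
    - apply Cmod_RInt_abs.
      + apply (ex_RInt_minus (V := C_R_NormedModule)).
        apply ex_RInt_v; intros t ht; apply Hc; apply D2; auto.
        apply ex_RInt_const.
      + intros t ht. left. apply Hd1. pose proof (P2 t). pose proof (between_abs y y' t ht). lra.
    - apply ex_RInt_v; intros t ht; apply Hc; apply D2; auto.
    - apply ex_RInt_const. }
  rewrite E4, RtoC_split.
  replace (Hs h y x x' + Ci * Vs h x' y y' - h (x, y) * (RtoC (x' - x) + Ci * RtoC (y' - y)))%C
    with ((Hs h y x x' - RtoC (x' - x) * h (x, y)) + Ci * (Vs h x' y y' - RtoC (y' - y) * h (x, y)))%C by ring.
  eapply Rle_trans. apply Cmod_triangle. rewrite Cmod_Ci_mult.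
  pose proof (Rabs_pos (x' - x)). pose proof (Rabs_pos (y' - y)). nra.
Qed.

Lemma disk_scale (t : R) (z : C) : 0 <= t <= 1 -> in_disk z -> in_disk (RtoC t * z)%C.
Proof.
  intros ht hz. unfold in_disk in *. rewrite Cmod_mult, Cmod_R, Rabs_right by lra.
  pose proof (Cmod_ge_0 z). nra.
Qed.

Lemma Sg_prim (g fp : C -> C) :
  (forall w, in_disk w -> ex_derive (K := C_AbsRing) (V := C_NormedModule) (fun u => fp u * g u)%C w) ->
  forall z, in_disk z -> Sg g fp z = (Hprim (fun u => fp u * g u)%C z - Hprim (fun u => fp u * g u)%C (RtoC 0))%C.
Proof.
  intros Hh z hz. set (h := (fun u => fp u * g u)%C) in *.
  assert (Hc : forall w, in_disk w -> ccont h w).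
  { intros w hw. destruct (Hh w hw) as [l hl]. eapply derC_ccont; eauto. }
  unfold Sg. apply (is_RInt_unique (V := C_R_CompleteNormedModule)).
  replace (Hprim h z - Hprim h (RtoC 0))%C with
    (minus (G := C_R_CompleteNormedModule) (Hprim h (RtoC 1 * z)%C) (Hprim h (RtoC 0 * z)%C)).
  2: { change (Cminus (Hprim h (RtoC 1 * z)%C) (Hprim h (RtoC 0 * z)%C) = (Hprim h z - Hprim h (RtoC 0))%C).
       f_equal; f_equal; ring. }
  apply (is_RInt_derive (V := C_R_CompleteNormedModule) (fun t => Hprim h (RtoC t * z)%C)).
  - intros t ht. rewrite Rmin_left, Rmax_right in ht by lra.
    apply (is_derive_ext (fun t => Hprim h (RtoC 0 + RtoC t * z)%C)).
    { intros s. f_equal. ring. }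
    change (fp (RtoC t * z)%C * g (RtoC t * z)%C * z)%C with (h (RtoC t * z)%C * z)%C.
    apply der_line. replace (RtoC 0 + RtoC t * z)%C with (RtoC t * z)%C by ring.
    apply Hprim_der. exact Hh. apply disk_scale; auto.
  - intros t ht. rewrite Rmin_left, Rmax_right in ht by lra.
    apply (continuous_ext (T := R_UniformSpace) (U := C_R_CompleteNormedModule)
      (fun t => (fun w => h w * z)%C (RtoC 0 + RtoC t * z)%C)).
    { intros s. simpl. unfold h. f_equal; f_equal; f_equal; ring. }
    apply (ccont_line (fun w => h w * z)%C).
    replace (RtoC 0 + RtoC t * z)%C with (RtoC t * z)%C by ring.
    intros eps Heps. destruct (ccont_scal h z (RtoC t * z)%C (Hc _ (disk_scale t z ht hz)) eps Heps) as [d [hd hw]].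
    exists d; split; auto. intros w hw'. specialize (hw w hw').
    replace (h w * z - h (RtoC t * z)%C * z)%C with (z * h w - z * h (RtoC t * z)%C)%C by ring. exact hw.
Qed.

Lemma Sg_holo (g fp : C -> C) :
  (forall w, in_disk w -> ex_derive (K := C_AbsRing) (V := C_NormedModule) (fun u => fp u * g u)%C w) ->
  holomorphic_on_disk (Sg g fp).
Proof.
  intros Hh z hz. exists (fp z * g z)%C.
  apply (is_derive_ext_loc (K := C_AbsRing) (V := C_NormedModule)
    (fun w => Hprim (fun u => fp u * g u)%C w - Hprim (fun u => fp u * g u)%C (RtoC 0))%C).
  - apply (locally_norm_le_locally (K := C_AbsRing) (V := AbsRing_NormedModule C_AbsRing)).
    unfold in_disk in hz. assert (hp : 0 < 1 - Cmod z) by lra.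
    exists (mkposreal _ hp). intros t Ht. change (Cmod (t - z) < 1 - Cmod z) in Ht.
    symmetry. apply Sg_prim; auto. unfold in_disk. pose proof (Cmod_tri3 t z). lra.
  - apply der_minus_const. apply (Hprim_der (fun u => fp u * g u)%C); auto.
Qed.

Definition clamp (r u : R) : R := Rmax 0 (Rmin u r).

Lemma clamp_lip r a b : Rabs (clamp r a - clamp r b) <= Rabs (a - b).
Proof. unfold clamp, Rmax, Rmin. repeat destruct Rle_dec; split_Rabs; lra. Qed.
Lemma clamp_range r u : 0 <= r -> 0 <= clamp r u <= r.
Proof. intros h. unfold clamp, Rmax, Rmin. repeat destruct Rle_dec; lra. Qed.
Lemma clamp_id r u : 0 <= u <= r -> clamp r u = u.
Proof. intros h. unfold clamp, Rmax, Rmin. repeat destruct Rle_dec; lra. Qed.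

Lemma ballR (x e y : R) : ball x e y <-> Rabs (y - x) < e.
Proof. unfold ball; simpl; unfold AbsRing_ball, abs, minus, plus, opp; simpl. tauto. Qed.

Definition rcont (f : R -> R) (x : R) : Prop :=
  forall eps, 0 < eps -> exists d, 0 < d /\ forall y, Rabs (y - x) < d -> Rabs (f y - f x) < eps.

Lemma rcont_cont f x : rcont f x -> continuous (T := R_UniformSpace) (U := R_UniformSpace) f x.
Proof.
  intros H. unfold continuous. apply filterlim_locally. intros eps.
  destruct (H eps (cond_pos eps)) as [d [hd Hd]].
  exists (mkposreal d hd). intros y hy. apply ballR. apply ballR in hy. apply Hd. exact hy.
Qed.

Lemma cont_nu_clamp (nu : R -> R) r u : weight nu -> 0 <= r < 1 ->
  continuous (T := R_UniformSpace) (U := R_UniformSpace) (fun x => nu (clamp r x)) u.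
Proof.
  intros [_ [Hc _]] hr. set (c := clamp r u).
  assert (hc : 0 <= c < 1) by (pose proof (clamp_range r u); unfold c; lra).
  specialize (Hc c hc).
  intros P HP. specialize (Hc P HP). destruct Hc as [eps He].
  exists eps. intros y hy. apply He.
  - apply ballR. apply ballR in hy. eapply Rle_lt_trans. apply clamp_lip. exact hy.
  - pose proof (clamp_range r y); lra.
Qed.

Lemma Cmod_polar (c t : R) : Cmod (c * cos t, c * sin t) = Rabs c.
Proof.
  unfold Cmod. cbn [fst snd]. rewrite <- sqrt_Rsqr_abs. f_equal. unfold Rsqr.
  pose proof (sin2_cos2 t). unfold Rsqr in H. replace ((c * cos t) ^ 2 + (c * sin t) ^ 2) with (c * c * (sin t * sin t + cos t * cos t)) by ring.
  rewrite H. ring.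
Qed.

Lemma cont_g_clamp (g : C -> C) r t u : holomorphic_on_disk g -> 0 <= r < 1 ->
  continuous (T := R_UniformSpace) (U := R_UniformSpace)
    (fun x => Cmod (g (clamp r x * cos t, clamp r x * sin t))) u.
Proof.
  intros Hg hr. apply rcont_cont. intros eps Heps.
  set (c := clamp r u). pose proof (clamp_range r u ltac:(lra)) as hc. fold c in hc.
  assert (hd : in_disk (c * cos t, c * sin t)).
  { unfold in_disk. rewrite Cmod_polar. rewrite Rabs_right; lra. }
  destruct (Hg _ hd) as [l hl]. destruct (derC_ccont _ _ _ hl eps Heps) as [d [hd0 Hd]].
  exists d. split; auto. intros y hy.
  assert (E : Cminus (clamp r y * cos t, clamp r y * sin t) (c * cos t, c * sin t) =
              ((clamp r y - c) * cos t, (clamp r y - c) * sin t)).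
  { unfold Cminus, Cplus, Copp; simpl. f_equal; ring. }
  assert (Cmod (Cminus (clamp r y * cos t, clamp r y * sin t) (c * cos t, c * sin t)) < d).
  { rewrite E, Cmod_polar. eapply Rle_lt_trans. apply clamp_lip. exact hy. }
  specialize (Hd _ H).
  eapply Rle_lt_trans; [|apply Hd].
  pose proof (Cmod_tri3 (g (clamp r y * cos t, clamp r y * sin t)) (g (c * cos t, c * sin t))).
  pose proof (Cmod_tri3 (g (c * cos t, c * sin t)) (g (clamp r y * cos t, clamp r y * sin t))).
  rewrite Cmod_sym in H1. unfold Rabs. destruct Rcase_abs; lra.
Qed.

Lemma cont_clamp r u : continuous (T := R_UniformSpace) (U := R_UniformSpace) (clamp r) u.
Proof.
  apply rcont_cont. intros eps Heps. exists eps. split; auto. intros y hy.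
  eapply Rle_lt_trans. apply clamp_lip. exact hy.
Qed.

Lemma ex_RInt_psi (nu : R -> R) (g : C -> C) t r : weight nu -> (forall u, 0 <= u < 1 -> 0 < nu u) ->
  holomorphic_on_disk g -> 0 <= r < 1 ->
  ex_RInt (fun u => Cmod (g (u * cos t, u * sin t)) / ((1 - u ^ 2) * nu u)) 0 r.
Proof.
  intros Hw Hpos Hg hr.
  apply (ex_RInt_ext (fun u => (fun v => Cmod (g (v * cos t, v * sin t)) / ((1 - v ^ 2) * nu v)) (clamp r u))).
  { intros x hx. rewrite Rmin_left, Rmax_right in hx by lra. simpl. rewrite clamp_id by lra. reflexivity. }
  apply (ex_RInt_continuous (V := R_CompleteNormedModule)). intros x _.
  pose proof (clamp_range r x ltac:(lra)) as hc.
  apply (continuous_mult (K := R_AbsRing) (fun u => Cmod (g (clamp r u * cos t, clamp r u * sin t)))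
     (fun u => / ((1 - clamp r u ^ 2) * nu (clamp r u)))).
  - apply cont_g_clamp; auto.
  - apply continuous_Rinv_comp.
    + apply (continuous_mult (K := R_AbsRing) (fun u => 1 - clamp r u ^ 2) (fun u => nu (clamp r u))).
      * apply (continuous_comp (U := R_UniformSpace) (V := R_UniformSpace) (W := R_UniformSpace) (clamp r) (fun v => 1 - v ^ 2)).
        apply cont_clamp. apply (ex_derive_continuous (K := R_AbsRing) (V := R_NormedModule)). auto_derive. auto.
      * apply cont_nu_clamp; auto.
    + assert (0 < nu (clamp r x)) by (apply Hpos; lra).
      assert (0 < 1 - clamp r x ^ 2) by nra.
      apply Rgt_not_eq. apply Rmult_lt_0_compat; auto.
Qed.

Lemma polar (z : C) : exists th, 0 <= th < 2 * PI /\ z = (Cmod z * cos th, Cmod z * sin th).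
Proof.
  pose proof PI_RGT_0 as hpi.
  destruct (Req_dec (Cmod z) 0) as [h0|h0].
  - exists 0. split. lra. apply Cmod_eq_0 in h0. rewrite h0. rewrite Cmod_0.
    unfold RtoC. f_equal; ring.
  - destruct z as [x y]. set (r := Cmod (x, y)) in *.
    assert (hr : 0 < r) by (pose proof (Cmod_ge_0 (x, y)); unfold r in *; lra).
    assert (hsq : x ^ 2 + y ^ 2 = r ^ 2).
    { unfold r, Cmod. cbn [fst snd]. rewrite pow2_sqrt. ring. nra. }
    set (a := x / r). set (b := y / r).
    assert (hab : a ^ 2 + b ^ 2 = 1) by (unfold a, b; field_simplify; [rewrite hsq; field|]; lra).
    assert (ha : -1 <= a <= 1) by (split; nra).
    assert (hb2 : sqrt (1 - a²) = Rabs b).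
    { unfold Rsqr. rewrite <- sqrt_Rsqr_abs. f_equal. unfold Rsqr. nra. }
    assert (ex : x = r * a) by (unfold a; field; lra).
    assert (ey : y = r * b) by (unfold b; field; lra).
    destruct (Rle_or_lt 0 b) as [hb|hb].
    + exists (acos a). split. pose proof (acos_bound a). lra.
      rewrite cos_acos, sin_acos, hb2, Rabs_right by lra. rewrite ex, ey at 1. reflexivity.
    + exists (2 * PI - acos a).
      assert (ha' : -1 < a < 1) by (split; nra).
      pose proof (acos_bound_lt a ha'). split. lra.
      rewrite cos_minus, sin_minus, cos_2PI, sin_2PI, cos_acos, sin_acos, hb2, Rabs_left by lra.
      rewrite ex, ey at 1. f_equal; ring.
Qed.

Lemma div_le_cross a b c d : 0 < b -> 0 < d -> a * d <= c * b -> a / b <= c / d.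
Proof.
  intros hb hd h. unfold Rdiv. apply Rmult_le_reg_r with (b * d). nra.
  replace (a * / b * (b * d)) with (a * d) by (field; lra).
  replace (c * / d * (b * d)) with (c * b) by (field; lra). exact h.
Qed.

Lemma M_nonneg (nu : R -> R) (f : C -> C) M : (forall r, 0 <= r < 1 -> 0 < nu r) ->
  (forall z, in_disk z -> nu (Cmod z) * Cmod (f z) <= M) -> 0 <= M.
Proof.
  intros Hpos Hb. assert (h0 : in_disk (RtoC 0)) by (unfold in_disk; rewrite Cmod_0; lra).
  specialize (Hb _ h0). rewrite Cmod_0 in Hb. pose proof (Hpos 0 ltac:(lra)).
  pose proof (Cmod_ge_0 (f (RtoC 0))). nra.
Qed.

Lemma f_bound (nu : R -> R) (f : C -> C) M : weight nu -> (forall r, 0 <= r < 1 -> 0 < nu r) ->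
  (forall z, in_disk z -> nu (Cmod z) * Cmod (f z) <= M) ->
  forall r w, 0 <= r < 1 -> Cmod w <= r -> Cmod (f w) <= M / nu r.
Proof.
  intros [_ [_ Hdec]] Hpos Hb r w hr hw.
  pose proof (M_nonneg nu f M Hpos Hb) as M0.
  pose proof (Cmod_ge_0 w).
  assert (hd : in_disk w) by (unfold in_disk; lra).
  specialize (Hb w hd).
  assert (h1 : 0 < nu (Cmod w)) by (apply Hpos; lra).
  assert (h2 : 0 < nu r) by (apply Hpos; lra).
  assert (h3 : nu r <= nu (Cmod w)) by (apply Hdec; lra).
  apply Rle_trans with (M / nu (Cmod w)).
  - apply Rmult_le_reg_l with (nu (Cmod w)); auto. unfold Rdiv.
    replace (nu (Cmod w) * (M * / nu (Cmod w))) with M by (field; lra). exact Hb.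
  - apply div_le_cross; auto. apply Rmult_le_compat_l; auto.
Qed.

Lemma fp_est (nu : R -> R) (f fp : C -> C) M alpha Cu :
  weight nu -> (forall r, 0 <= r < 1 -> 0 < nu r) -> 0 < alpha -> 0 < Cu ->
  (forall r s, 0 <= r -> r <= s -> s < 1 ->
     nu r / Rpower (1 - r ^ 2) alpha <= Cu * (nu s / Rpower (1 - s ^ 2) alpha)) ->
  (forall z, in_disk z -> is_derive (K := C_AbsRing) (V := C_NormedModule) f z (fp z)) ->
  (forall z, in_disk z -> nu (Cmod z) * Cmod (f z) <= M) ->
  forall w, in_disk w ->
    Cmod (fp w) <= 64 * Cu * Rpower 4 alpha * M / ((1 - Cmod w ^ 2) * nu (Cmod w)).
Proof.
  intros Hw Hpos ha hC HU Hf Hb w hw. unfold in_disk in hw.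
  set (r := Cmod w) in *. pose proof (Cmod_ge_0 w) as r0. fold r in r0.
  set (s := (1 - r) / 4). set (rho := (1 + r) / 2).
  assert (hs : 0 < s) by (unfold s; lra).
  assert (hz : Cmod w + 2 * s < 1) by (unfold s; fold r; lra).
  pose proof (M_nonneg nu f M Hpos Hb) as M0.
  assert (hrho : 0 <= rho < 1) by (unfold rho; lra).
  assert (nrho : 0 < nu rho) by (apply Hpos; auto).
  assert (nr : 0 < nu r) by (apply Hpos; lra).
  assert (HB : forall u, onq w s u -> Cmod (f u) <= M / nu rho).
  { intros u hu. apply (f_bound nu f M Hw Hpos Hb rho u hrho).
    destruct (onq_in w s u hu). destruct u as [x y].
    pose proof (inq_near w s x y H H0). pose proof (Cmod_tri3 (x, y) w). fold r in H2.
    unfold rho, s in *. lra. }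
  pose proof (holo_est f fp w s (M / nu rho) Hf hs hz HB) as E.
  assert (E2 : Cmod (fp w) <= 32 * M / (nu rho * (1 - r))).
  { eapply Rle_trans. apply E. right. unfold s. field. split; lra. }
  assert (P1 : 0 < 1 - r ^ 2) by nra.
  assert (P2 : 0 < 1 - rho ^ 2) by nra.
  assert (U := HU r rho r0 ltac:(unfold rho; lra) ltac:(lra)).
  assert (Rp1 : 0 < Rpower (1 - r ^ 2) alpha) by (unfold Rpower; apply exp_pos).
  assert (Rp2 : 0 < Rpower (1 - rho ^ 2) alpha) by (unfold Rpower; apply exp_pos).
  assert (Rp4 : 0 < Rpower 4 alpha) by (unfold Rpower; apply exp_pos).
  assert (Q : Rpower (1 - r ^ 2) alpha <= Rpower 4 alpha * Rpower (1 - rho ^ 2) alpha).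
  { rewrite Rpower_mult_distr by lra. apply Rle_Rpower_l. lra. split. lra.
    unfold rho. nra. }
  assert (N : nu r <= Cu * Rpower 4 alpha * nu rho).
  { assert (nu r <= Cu * (nu rho / Rpower (1 - rho ^ 2) alpha) * Rpower (1 - r ^ 2) alpha).
    { apply Rmult_le_reg_r with (/ Rpower (1 - r ^ 2) alpha). apply Rinv_0_lt_compat; auto.
      replace (Cu * (nu rho / Rpower (1 - rho ^ 2) alpha) * Rpower (1 - r ^ 2) alpha * / Rpower (1 - r ^ 2) alpha)
        with (Cu * (nu rho / Rpower (1 - rho ^ 2) alpha)) by (field; lra). exact U. }
    eapply Rle_trans. apply H.
    replace (Cu * (nu rho / Rpower (1 - rho ^ 2) alpha) * Rpower (1 - r ^ 2) alpha)
      with (Cu * nu rho * (Rpower (1 - r ^ 2) alpha / Rpower (1 - rho ^ 2) alpha)) by (field; lra).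
    replace (Cu * Rpower 4 alpha * nu rho) with (Cu * nu rho * Rpower 4 alpha) by ring.
    apply Rmult_le_compat_l. nra.
    apply Rmult_le_reg_r with (Rpower (1 - rho ^ 2) alpha); auto. unfold Rdiv.
    rewrite Rmult_assoc, Rinv_l by lra. lra. }
  eapply Rle_trans. apply E2. apply div_le_cross.
  - apply Rmult_lt_0_compat; lra.
  - apply Rmult_lt_0_compat; lra.
  - assert (1 - r ^ 2 <= 2 * (1 - r)) by nra.
    assert (0 <= 32 * M) by lra.
    apply Rle_trans with (32 * M * (2 * (1 - r) * (Cu * Rpower 4 alpha * nu rho))).
    + apply Rmult_le_compat_l; auto.
      apply Rmult_le_compat; lra.
    + right. ring.
Qed.

Theorem proposition1 (nu mu : R -> R) (g : C -> C) :
  weight nu -> (forall r, 0 <= r < 1 -> 0 < nu r) -> property_U nu ->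
  weight mu ->
  holomorphic_on_disk g ->
  (exists K : R, forall t theta : R, 0 <= t < 1 -> 0 <= theta < 2 * PI ->
     mu t * RInt (fun r : R =>
                    Cmod (g (r * cos theta, r * sin theta))
                      / ((1 - r ^ 2) * nu r)) 0 t <= K) ->
  (* S_g : H^oo_nu -> H^oo_mu is bounded *)
  exists Cst : R, 0 <= Cst /\
    forall (f fp : C -> C) (M : R),
      (forall z, in_disk z -> is_derive (K := C_AbsRing) f z (fp z)) ->
      (forall z, in_disk z -> nu (Cmod z) * Cmod (f z) <= M) ->
      holomorphic_on_disk (Sg g fp) /\
      (forall z, in_disk z -> mu (Cmod z) * Cmod (Sg g fp z) <= Cst * M).
Proof.
  intros Hnu Hpos HU Hmu Hg [K HK].
  destruct HU as [alpha [ha [Cu [hCu HCu]]]].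
  set (A := 64 * Cu * Rpower 4 alpha).
  assert (hA : 0 <= A).
  { unfold A. assert (0 < Rpower 4 alpha) by (unfold Rpower; apply exp_pos). nra. }
  assert (hK : 0 <= K).
  { pose proof PI_RGT_0. specialize (HK 0 0 ltac:(lra) ltac:(lra)).
    rewrite RInt_point in HK. unfold zero in HK; simpl in HK. lra. }
  exists (A * K). split. apply Rmult_le_pos; auto.
  intros f fp M Hf Hb.
  pose proof (M_nonneg nu f M Hpos Hb) as M0.
  assert (HBd : forall r, r < 1 -> exists B, forall w, Cmod w <= r -> Cmod (f w) <= B).
  { intros r hr. destruct (Rle_or_lt 0 r) as [h|h].
    - exists (M / nu r). intros w hw. apply (f_bound nu f M Hnu Hpos Hb r w); auto.
    - exists 0. intros w hw. pose proof (Cmod_ge_0 w). lra. }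
  assert (Hfpd : forall w, in_disk w -> ex_derive (K := C_AbsRing) (V := C_NormedModule) fp w)
    by (apply holo_Fd_diff with f; auto).
  assert (Hh : forall w, in_disk w -> ex_derive (K := C_AbsRing) (V := C_NormedModule) (fun u => fp u * g u)%C w).
  { intros w hw. destruct (Hfpd w hw) as [l1 h1]. destruct (Hg w hw) as [l2 h2].
    eexists. apply der_mult; eauto. }
  split. apply Sg_holo; auto.
  intros z hz.
  destruct (polar z) as [th [hth Ez]].
  assert (hr : 0 <= Cmod z < 1) by (split; [apply Cmod_ge_0|exact hz]).
  set (r := Cmod z) in *.
  set (psi := fun u => Cmod (g (u * cos th, u * sin th)) / ((1 - u ^ 2) * nu u)).
  assert (Epsi : ex_RInt psi 0 r) by (apply ex_RInt_psi; auto).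
  assert (I1 : is_RInt (fun t => scal r (psi (r * t + 0))) 0 1 (RInt psi 0 r)).
  { apply (is_RInt_comp_lin (V := R_NormedModule) psi r 0 0 1). replace (r * 0 + 0) with 0 by ring. replace (r * 1 + 0) with r by ring.
    apply (RInt_correct (V := R_CompleteNormedModule)). exact Epsi. }
  assert (I2 : is_RInt (fun t => scal (A * M) (scal r (psi (r * t + 0)))) 0 1 (scal (A * M) (RInt psi 0 r)))
    by (apply (is_RInt_scal (V := R_NormedModule)); exact I1).
  assert (Hcfp : forall w, in_disk w -> ccont (fun u => fp u * g u * z)%C w).
  { intros w hw. destruct (Hh w hw) as [l hl].
    apply (ccont_mult (fun u => fp u * g u)%C (fun _ => z)). eapply derC_ccont; eauto.
    intros eps Heps. exists 1. split. lra. intros. replace (z - z)%C with (RtoC 0) by ring. rewrite Cmod_0. lra. }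
  assert (EX : ex_RInt (V := C_R_NormedModule) (fun t => fp (RtoC t * z)%C * g (RtoC t * z)%C * z)%C 0 1).
  { apply (ex_RInt_ext (V := C_R_NormedModule) (fun t => (fun u => fp u * g u * z)%C (RtoC 0 + RtoC t * z)%C)).
    { intros x _. simpl. replace (RtoC 0 + RtoC x * z)%C with (RtoC x * z)%C by ring. reflexivity. }
    apply (ex_RInt_line (fun u => fp u * g u * z)%C (RtoC 0) z). intros t ht. rewrite Rmin_left, Rmax_right in ht by lra.
    replace (RtoC 0 + RtoC t * z)%C with (RtoC t * z)%C by ring. apply Hcfp. apply disk_scale; auto. }
  assert (BND : Cmod (Sg g fp z) <= A * M * RInt psi 0 r).
  { unfold Sg. rewrite <- normCR.
    apply (norm_RInt_le (V := C_R_NormedModule) (fun t => fp (RtoC t * z)%C * g (RtoC t * z)%C * z)%C (fun t => scal (A * M) (scal r (psi (r * t + 0)))) 0 1 _ _).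
    - lra.
    - intros t ht. rewrite normCR, !Cmod_mult.
      set (v := r * t + 0).
      assert (hv : Cmod (RtoC t * z)%C = v).
      { rewrite Cmod_mult, Cmod_R, Rabs_right by lra. fold r. unfold v. ring. }
      assert (Etz : (RtoC t * z)%C = (v * cos th, v * sin th)).
      { rewrite Ez at 1. unfold v, Cmult, RtoC. simpl. f_equal; ring. }
      assert (hdt : in_disk (RtoC t * z)%C) by (apply disk_scale; auto).
      pose proof (fp_est nu f fp M alpha Cu Hnu Hpos ha hCu HCu Hf Hb _ hdt) as FE.
      rewrite hv in FE. fold A in FE.
      assert (hv1 : 0 <= v < 1) by (unfold in_disk in hdt; rewrite hv in hdt; split; [unfold v; nra|auto]).
      assert (nv : 0 < nu v) by (apply Hpos; auto).
      assert (dv : 0 < 1 - v ^ 2) by nra.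
      change (Cmod (fp (RtoC t * z)%C) * Cmod (g (RtoC t * z)%C) * r <= A * M * (r * psi v)).
      rewrite Etz. unfold psi.
      pose proof (Cmod_ge_0 (g (v * cos th, v * sin th))).
      apply Rle_trans with (A * M / ((1 - v ^ 2) * nu v) * Cmod (g (v * cos th, v * sin th)) * r).
      + apply Rmult_le_compat_r. lra. apply Rmult_le_compat_r; auto. rewrite <- Etz. exact FE.
      + right. field. split; lra.
    - apply (RInt_correct (V := C_R_CompleteNormedModule)). exact EX.
    - exact I2. }
  assert (mu0 : 0 <= mu r) by (destruct Hmu as [h _]; apply h; auto).
  specialize (HK r th hr hth). fold psi in HK.
  apply Rle_trans with (mu r * (A * M * RInt psi 0 r)).
  - apply Rmult_le_compat_l; auto.
  - assert (0 <= A * M) by (apply Rmult_le_pos; auto).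
    replace (mu r * (A * M * RInt psi 0 r)) with (A * M * (mu r * RInt psi 0 r)) by ring.
    replace (A * K * M) with (A * M * K) by ring.
    apply Rmult_le_compat_l; auto.
Qed.
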